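(* Let $R$ be a semisimple ring and $(A,C)$ an almost-Koszul pair over $R$. If $A$ and $C$ are left locally finite, then the pair $({}^{*\text{-gr}}C,{}^{*\text{-gr}}A)$ is almost-Koszul (over $R^{\mathrm{op}}$). Similarly, if $A$ and $C$ are right locally finite, then $(C^{*\text{-gr}},A^{*\text{-gr}})$ is almost-Koszul.
   Context: $\otimes=\otimes_R$. A connected graded $R$-ring is an $\mathbb N$-graded algebra $A=\bigoplus A^n$ in $R$-bimodules with $A^0=R$, multiplication components $\mu^{p,q}$; a connected graded $R$-coring is an $\mathbb N$-graded coalgebra $C=\bigoplus C_n$ in $R$-bimodules with $C_0=R$ and components $\Delta_{p,q}(c)=\sum c_{1,p}\otimes c_{2,q}$. An almost-Koszul pair $(A,C)$ consists of such $A$, $C$ and an $R$-bimodule isomorphism $\theta\colon C_1\to A^1$ with $\mu^{1,1}\circ(\theta\otimes\theta)\circ\Delta_{1,1}=0$ on $C_2$ (for a pair whose first entry is a ring over $R^{\mathrm{op}}$ and second a coring over $R^{\mathrm{op}}$, the same definition over $R^{\mathrm{op}}$). Left (right) locally finite: every homogeneous component finitely generated as a left (right) $R$-module. ${}^*V=\operatorname{Hom}_R({}_RV,{}_RR)$ is an $R^{\mathrm{op}}$-bimodule via $(r\cdot\alpha)(v)=\alpha(v)r$, $(\alpha\cdot r)(v)=\alpha(vr)$. ${}^{*\text{-gr}}A=\bigoplus{}^*(A^n)$ is a connected graded $R^{\mathrm{op}}$-coring with $\Delta_{n,m}(\alpha)=\sum_i\alpha_i'\otimes_{R^{\mathrm{op}}}\alpha_i''$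 characterized by $\alpha(a'a'')=\sum_i\alpha_i'(a'\alpha_i''(a''))$ for $a'\in A^n$, $a''\in A^m$, and counit from ${}^*R\cong R^{\mathrm{op}}$; ${}^{*\text{-gr}}C=\bigoplus{}^*(C_n)$ is a connected graded $R^{\mathrm{op}}$-ring with $(\alpha*\beta)(c)=\sum\alpha(c_{1,n}\beta(c_{2,m}))$ and unit the counit of $C$. Right graded duals $A^{*\text{-gr}}$, $C^{*\text{-gr}}$ are defined symmetrically using right $R$-linear maps. *)

(* Defs.v *)
(* MathComp (algebra). Noncommutative ring R : pzRingType, R^op = R^c. *)
From mathcomp Require Import all_boot all_algebra.
From Stdlib Require Import ProofIrrelevance FunctionalExtensionality.
Set Implicit Arguments.
Unset Strict Implicit.
Unset Printing Implicit Defensive.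
Import GRing.Theory.
Local Open Scope ring_scope.

Record bimod_laws (R : pzRingType) (V : Type) (z : V) (add : V -> V -> V)
  (opp : V -> V) (lact : R -> V -> V) (ract : V -> R -> V) : Prop := BimodLaws {
  addA : forall u v w, add u (add v w) = add (add u v) w;
  addC : forall u v, add u v = add v u;
  add0 : forall v, add z v = v;
  addN : forall v, add (opp v) v = z;
  lactDv : forall r u v, lact r (add u v) = add (lact r u) (lact r v);
  lactDr : forall r s v, lact (r + s) v = add (lact r v) (lact s v);
  lactM : forall r s v, lact (r * s) v = lact r (lact s v);
  lact1 : forall v, lact 1 v = v;
  ractDv : forall r u v, ract (add u v) r = add (ract u r) (ract v r);
  ractDr : forall r s v, ract v (r + s) = add (ract v r) (ract v s);
  ractM : forall r s v, ract v (r * s) = ract (ract v r) s;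
  ract1 : forall v, ract v 1 = v;
  lractA : forall r s v, ract (lact r v) s = lact r (ract v s)
}.

Record bimod (R : pzRingType) := Bimod {
  bcar :> Type;
  bzero : bcar;
  badd : bcar -> bcar -> bcar;
  bopp : bcar -> bcar;
  blact : R -> bcar -> bcar;
  bract : bcar -> R -> bcar;
  blaws : bimod_laws bzero badd bopp blact bract
}.
Arguments bzero {R} b.
Arguments badd {R b}.
Arguments bopp {R b}.
Arguments blact {R b}.
Arguments bract {R b}.

Definition bsum (R : pzRingType) (V : bimod R) (s : seq V) : V :=
  foldr badd (bzero V) s.

Definition gcast (F : nat -> Type) (m n : nat) (e : m = n) (x : F m) : F n :=
  eq_rect m F x n e.
Arguments gcast F [m n] e x.

Definition is_bimod_map (R : pzRingType) (V W : bimod R) (f : V -> W) : Prop :=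
  (forall u v, f (badd u v) = badd (f u) (f v)) /\
  (forall r v, f (blact r v) = blact r (f v)) /\
  (forall r v, f (bract v r) = bract (f v) r).

Definition bijective_map (X Y : Type) (f : X -> Y) : Prop :=
  (forall x y, f x = f y -> x = y) /\ (forall y, exists x, f x = y).

Lemma regular_laws (R : pzRingType) :
  bimod_laws (0 : R) +%R -%R *%R *%R.
Proof.
split=> *; rewrite ?addrA ?mulrDr ?mulrDl ?mulrA ?mul1r ?mulr1 ?add0r ?addNr //.
exact: addrC.
Qed.
Definition regular (R : pzRingType) : bimod R := Bimod (regular_laws R).

(* Tensor products over R, described through their universal property *)
(* An element of M (x)_R N is represented by a finite list of simple   *)
(* tensors; two lists represent the same element iff every R-balanced  *)
(* biadditive map into every abelian group takes the same value.       *)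

Definition balanced2 (R : pzRingType) (M N : bimod R) (G : zmodType)
  (f : M -> N -> G) : Prop :=
  (forall m m' n, f (badd m m') n = f m n + f m' n) /\
  (forall m n n', f m (badd n n') = f m n + f m n') /\
  (forall m r n, f (bract m r) n = f m (blact r n)).

Definition teq (R : pzRingType) (M N : bimod R) (s t : seq (M * N)) : Prop :=
  forall (G : zmodType) (f : M -> N -> G), balanced2 f ->
    \sum_(x <- s) f x.1 x.2 = \sum_(x <- t) f x.1 x.2.

Definition balanced3 (R : pzRingType) (M N P : bimod R) (G : zmodType)
  (f : M -> N -> P -> G) : Prop :=
  (forall m m' n p, f (badd m m') n p = f m n p + f m' n p) /\
  (forall m n n' p, f m (badd n n') p = f m n p + f m n' p) /\
  (forall m n p p', f m n (badd p p') = f m n p + f m n p') /\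
  (forall m r n p, f (bract m r) n p = f m (blact r n) p) /\
  (forall m n r p, f m (bract n r) p = f m n (blact r p)).

Definition teq3 (R : pzRingType) (M N P : bimod R) (s t : seq (M * N * P)) : Prop :=
  forall (G : zmodType) (f : M -> N -> P -> G), balanced3 f ->
    \sum_(x <- s) f x.1.1 x.1.2 x.2 = \sum_(x <- t) f x.1.1 x.1.2 x.2.

(* Connected graded R-rings: A = (+)_n A n, with components mul p q    *)
(* of the multiplication and unit eta : R -> A 0 (an isomorphism).     *)

Definition is_cgring (R : pzRingType) (A : nat -> bimod R)
  (mul : forall p q, A p -> A q -> A (p + q)%N) (eta : R -> A 0%N) : Prop :=
  (* each mu^{p,q} is an R-bimodule map out of A^p (x)_R A^q *)
  (forall p q a a' b, mul p q (badd a a') b = badd (mul p q a b) (mul p q a' b)) /\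
  (forall p q a b b', mul p q a (badd b b') = badd (mul p q a b) (mul p q a b')) /\
  (forall p q r a b, mul p q (bract a r) b = mul p q a (blact r b)) /\
  (forall p q r a b, mul p q (blact r a) b = blact r (mul p q a b)) /\
  (forall p q r a b, mul p q a (bract b r) = bract (mul p q a b) r) /\
  (forall p q r (a : A p) (b : A q) (c : A r),
     mul (p + q)%N r (mul p q a b) c
     = gcast (fun k => A k : Type) (addnA p q r) (mul p (q + r)%N a (mul q r b c))) /\
  is_bimod_map (V := regular R) eta /\ bijective_map eta /\
  (forall q (b : A q), mul 0%N q (eta 1) b = b) /\
  (forall p (a : A p), mul p 0%N a (eta 1) = gcast (fun k => A k : Type) (esym (addn0 p)) a).

(* Connected graded R-corings: components delta p q of the             *)
(* comultiplication (values in C p (x)_R C q, given by representatives)*)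
(* and counit eps : C 0 -> R (an isomorphism).                          *)

Definition is_cgcoring (R : pzRingType) (C : nat -> bimod R)
  (delta : forall p q, C (p + q)%N -> seq (C p * C q)) (eps : C 0%N -> R) : Prop :=
  (* each Delta_{p,q} is a bimodule map into C_p (x)_R C_q *)
  (forall p q c c', teq (delta p q (badd c c')) (delta p q c ++ delta p q c')) /\
  (forall p q r c, teq (delta p q (blact r c))
                       [seq (blact r x.1, x.2) | x <- delta p q c]) /\
  (forall p q r c, teq (delta p q (bract c r))
                       [seq (x.1, bract x.2 r) | x <- delta p q c]) /\
  (forall p q r (c : C (p + q + r)%N),
     teq3 [seq ((u.1, u.2), x.2) | x <- delta (p + q)%N r c, u <- delta p q x.1]
          [seq ((x.1, u.1), u.2) | x <- delta p (q + r)%N (gcast (fun k => C k : Type) (esym (addnA p q r)) c),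
                                   u <- delta q r x.2]) /\
  is_bimod_map (W := regular R) eps /\ bijective_map eps /\
  (forall q (c : C q), bsum [seq blact (eps x.1) x.2 | x <- delta 0%N q c] = c) /\
  (forall p (c : C (p + 0)%N),
     bsum [seq bract x.1 (eps x.2) | x <- delta p 0%N c] = gcast (fun k => C k : Type) (addn0 p) c).

Definition almost_koszul (R : pzRingType)
  (A : nat -> bimod R) (mul : forall p q, A p -> A q -> A (p + q)%N) (eta : R -> A 0%N)
  (C : nat -> bimod R) (delta : forall p q, C (p + q)%N -> seq (C p * C q))
  (eps : C 0%N -> R) (theta : C 1%N -> A 1%N) : Prop :=
  is_cgring mul eta /\ is_cgcoring delta eps /\
  is_bimod_map theta /\ bijective_map theta /\
  (forall c : C 2%N,
     bsum [seq mul 1%N 1%N (theta x.1) (theta x.2) | x <- delta 1%N 1%N c] = bzero (A 2%N)).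

Definition left_fg (R : pzRingType) (V : bimod R) : Prop :=
  exists s : seq V, forall v : V, exists rs : seq R,
    size rs = size s /\ v = bsum [seq blact x.1 x.2 | x <- zip rs s].

Definition right_fg (R : pzRingType) (V : bimod R) : Prop :=
  exists s : seq V, forall v : V, exists rs : seq R,
    size rs = size s /\ v = bsum [seq bract x.2 x.1 | x <- zip rs s].

Definition left_locally_finite (R : pzRingType) (A : nat -> bimod R) : Prop :=
  forall n, left_fg (A n).
Definition right_locally_finite (R : pzRingType) (A : nat -> bimod R) : Prop :=
  forall n, right_fg (A n).

Definition left_ideal (R : pzRingType) (I : R -> Prop) : Prop :=
  I 0 /\ (forall x y, I x -> I y -> I (x + y)) /\ (forall r x, I x -> I (r * x)).

Definition semisimple_ring (R : pzRingType) : Prop :=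
  forall I : R -> Prop, left_ideal I ->
    exists J : R -> Prop, left_ideal J /\
      (forall x, I x -> J x -> x = 0) /\
      (forall x, exists a b, I a /\ J b /\ x = a + b).

Section LeftDual.
Variables (R : pzRingType) (V : bimod R).

Definition left_lin (f : V -> R) : Prop :=
  (forall u v, f (badd u v) = f u + f v) /\ (forall r v, f (blact r v) = r * f v).

Definition ldcar := {f : V -> R | left_lin f}.

Lemma ldual_eq (f g : ldcar) : (forall v, proj1_sig f v = proj1_sig g v) -> f = g.
Proof.
case: f g => [f Hf] [g Hg] /= E.
have efg : f = g by apply: functional_extensionality.
subst g; by rewrite (proof_irrelevance _ Hf Hg).
Qed.

Let L := blaws V.

Lemma ld0_lin : left_lin (fun _ => 0).
Proof. by split=> *; rewrite ?addr0 ?mulr0. Qed.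
Definition ld0 : ldcar := exist _ _ ld0_lin.

Lemma ldadd_lin (f g : ldcar) :
  left_lin (fun v => proj1_sig f v + proj1_sig g v).
Proof.
case: f g => [f [f1 f2]] [g [g1 g2]] /=; split=> *.
  by rewrite f1 g1 addrACA.
by rewrite f2 g2 mulrDr.
Qed.
Definition ldadd (f g : ldcar) : ldcar := exist _ _ (ldadd_lin f g).

Lemma ldopp_lin (f : ldcar) : left_lin (fun v => - proj1_sig f v).
Proof.
case: f => [f [f1 f2]] /=; split=> *; first by rewrite f1 opprD.
by rewrite f2 mulrN.
Qed.
Definition ldopp (f : ldcar) : ldcar := exist _ _ (ldopp_lin f).

Lemma ldl_lin (r : R^c) (f : ldcar) : left_lin (fun v => proj1_sig f v * (r : R)).
Proof.
case: f => [f [f1 f2]] /=; split=> *; first by rewrite f1 mulrDl.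
by rewrite f2 mulrA.
Qed.
Definition ldlact (r : R^c) (f : ldcar) : ldcar := exist _ _ (ldl_lin r f).

Lemma ldr_lin (f : ldcar) (r : R^c) : left_lin (fun v => proj1_sig f (bract v (r : R))).
Proof.
case: f => [f [f1 f2]] /=; split=> *; first by rewrite (ractDv L) f1.
by rewrite (lractA L) f2.
Qed.
Definition ldract (f : ldcar) (r : R^c) : ldcar := exist _ _ (ldr_lin f r).

Lemma ldual_laws : bimod_laws ld0 ldadd ldopp ldlact ldract.
Proof.
split.
- by move=> ? ? ?; apply: ldual_eq => v /=; rewrite addrA.
- by move=> ? ?; apply: ldual_eq => v /=; rewrite addrC.
- by move=> ?; apply: ldual_eq => v /=; rewrite add0r.
- by move=> ?; apply: ldual_eq => v /=; rewrite addNr.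
- by move=> ? ? ?; apply: ldual_eq => v /=; rewrite mulrDl.
- by move=> ? ? ?; apply: ldual_eq => v /=; rewrite mulrDr.
- by move=> ? ? ?; apply: ldual_eq => v /=; rewrite -[RHS]mulrA.
- by move=> ?; apply: ldual_eq => v /=; rewrite mulr1.
- by move=> ? ? ?; apply: ldual_eq.
- move=> r s [f [f1 f2]]; apply: ldual_eq => v /=.
  by rewrite -f1 -(ractDr L).
- move=> r s [f [f1 f2]]; apply: ldual_eq => v /=.
  by rewrite -(ractM L).
- by move=> [f [f1 f2]]; apply: ldual_eq => v /=; rewrite (ract1 L).
- by move=> ? ? ?; apply: ldual_eq.
Qed.

Definition ldual : bimod R^c := Bimod ldual_laws.
End LeftDual.

Section RightDual.
Variables (R : pzRingType) (V : bimod R).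

Definition right_lin (f : V -> R) : Prop :=
  (forall u v, f (badd u v) = f u + f v) /\ (forall r v, f (bract v r) = f v * r).

Definition rdcar := {f : V -> R | right_lin f}.

Lemma rdual_eq (f g : rdcar) : (forall v, proj1_sig f v = proj1_sig g v) -> f = g.
Proof.
case: f g => [f Hf] [g Hg] /= E.
have efg : f = g by apply: functional_extensionality.
subst g; by rewrite (proof_irrelevance _ Hf Hg).
Qed.

Let L := blaws V.

Lemma rd0_lin : right_lin (fun _ => 0).
Proof. by split=> *; rewrite ?addr0 ?mul0r. Qed.
Definition rd0 : rdcar := exist _ _ rd0_lin.

Lemma rdadd_lin (f g : rdcar) :
  right_lin (fun v => proj1_sig f v + proj1_sig g v).
Proof.
case: f g => [f [f1 f2]] [g [g1 g2]] /=; split=> *.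
  by rewrite f1 g1 addrACA.
by rewrite f2 g2 mulrDl.
Qed.
Definition rdadd (f g : rdcar) : rdcar := exist _ _ (rdadd_lin f g).

Lemma rdopp_lin (f : rdcar) : right_lin (fun v => - proj1_sig f v).
Proof.
case: f => [f [f1 f2]] /=; split=> *; first by rewrite f1 opprD.
by rewrite f2 mulNr.
Qed.
Definition rdopp (f : rdcar) : rdcar := exist _ _ (rdopp_lin f).

Lemma rdl_lin (r : R^c) (f : rdcar) : right_lin (fun v => proj1_sig f (blact (r : R) v)).
Proof.
case: f => [f [f1 f2]] /=; split=> *; first by rewrite (lactDv L) f1.
by rewrite -(lractA L) f2.
Qed.
Definition rdlact (r : R^c) (f : rdcar) : rdcar := exist _ _ (rdl_lin r f).

Lemma rdr_lin (f : rdcar) (r : R^c) : right_lin (fun v => (r : R) * proj1_sig f v).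
Proof.
case: f => [f [f1 f2]] /=; split=> *; first by rewrite f1 mulrDr.
by rewrite f2 mulrA.
Qed.
Definition rdract (f : rdcar) (r : R^c) : rdcar := exist _ _ (rdr_lin f r).

Lemma rdual_laws : bimod_laws rd0 rdadd rdopp rdlact rdract.
Proof.
split.
- by move=> ? ? ?; apply: rdual_eq => v /=; rewrite addrA.
- by move=> ? ?; apply: rdual_eq => v /=; rewrite addrC.
- by move=> ?; apply: rdual_eq => v /=; rewrite add0r.
- by move=> ?; apply: rdual_eq => v /=; rewrite addNr.
- by move=> ? ? ?; apply: rdual_eq.
- move=> r s [f [f1 f2]]; apply: rdual_eq => v /=.
  by rewrite -f1 -(lactDr L).
- move=> r s [f [f1 f2]]; apply: rdual_eq => v /=.
  by rewrite -(lactM L).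
- by move=> [f [f1 f2]]; apply: rdual_eq => v /=; rewrite (lact1 L).
- by move=> ? ? ?; apply: rdual_eq => v /=; rewrite mulrDr.
- by move=> ? ? ?; apply: rdual_eq => v /=; rewrite mulrDl.
- by move=> ? ? ?; apply: rdual_eq => v /=; rewrite [RHS]mulrA.
- by move=> ?; apply: rdual_eq => v /=; rewrite mul1r.
- by move=> ? ? ?; apply: rdual_eq.
Qed.

Definition rdual : bimod R^c := Bimod rdual_laws.
End RightDual.

Definition ldev (R : pzRingType) (V : bimod R) (f : ldual V) : V -> R := proj1_sig f.
Definition rdev (R : pzRingType) (V : bimod R) (f : rdual V) : V -> R := proj1_sig f.

(* Main.v *)
Require Import Defs.
From mathcomp Require Import all_boot all_algebra.
From Stdlib Require Import ClassicalEpsilon Classical ProofIrrelevance FunctionalExtensionality.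
Set Implicit Arguments.
Unset Strict Implicit.
Unset Printing Implicit Defensive.
Import GRing.Theory.
Local Open Scope ring_scope.


Section BimodAlg.
Variables (R : pzRingType) (V : bimod R).
Let L := blaws V.
Implicit Types u v w : V.

Lemma badd0 v : badd v (bzero V) = v.
Proof. by rewrite (Defs.addC L) (Defs.add0 L). Qed.
Lemma baddN v : badd v (bopp v) = bzero V.
Proof. by rewrite (Defs.addC L) (Defs.addN L). Qed.
Lemma baddI u v w : badd u w = badd v w -> u = v.
Proof.
move=> E; have := f_equal (fun x => badd x (bopp w)) E.
by rewrite -!(Defs.addA L) baddN !badd0.
Qed.
Lemma baddACA u v w (x : V) : badd (badd u v) (badd w x) = badd (badd u w) (badd v x).
Proof.
by rewrite -!(Defs.addA L); congr badd; rewrite !(Defs.addA L) [badd v w](Defs.addC L).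
Qed.
Lemma bself0 v : badd v v = v -> v = bzero V.
Proof. by move=> E; apply: (@baddI _ _ v); rewrite E (Defs.add0 L). Qed.
Lemma blact0 (x : V) : blact 0 x = bzero V.
Proof. by apply: bself0; rewrite -(Defs.lactDr L) addr0. Qed.
Lemma blactr0 (r : R) : blact r (bzero V) = bzero V.
Proof. by apply: bself0; rewrite -(Defs.lactDv L) (Defs.add0 L). Qed.
Lemma bract0 (x : V) : bract x 0 = bzero V.
Proof. by apply: bself0; rewrite -(Defs.ractDr L) addr0. Qed.
Lemma bract0v (r : R) : bract (bzero V) r = bzero V.
Proof. by apply: bself0; rewrite -(Defs.ractDv L) (Defs.add0 L). Qed.
Lemma bopp_lact v : bopp v = blact (-1) v.
Proof.
apply: (@baddI _ _ v); rewrite (Defs.addN L).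
by rewrite -{2}[v](Defs.lact1 L) -(Defs.lactDr L) addNr blact0.
Qed.
Lemma bopp_ract v : bopp v = bract v (-1).
Proof.
apply: (@baddI _ _ v); rewrite (Defs.addN L).
by rewrite -{2}[v](Defs.ract1 L) -(Defs.ractDr L) addNr bract0.
Qed.
Lemma bsum_cat (s t : seq V) : bsum (s ++ t) = badd (bsum s) (bsum t).
Proof.
elim: s => [|x s IH] /=; first by rewrite (Defs.add0 L).
by rewrite IH (Defs.addA L).
Qed.
End BimodAlg.

Lemma addmap0 (R : pzRingType) (V : bimod R) (G : zmodType) (f : V -> G) :
  (forall u v, f (badd u v) = f u + f v) -> f (bzero V) = 0.
Proof.
move=> Hf; have := Hf (bzero V) (bzero V); rewrite (Defs.add0 (blaws V)).
by move=> E; apply: (@addrI _ (f (bzero V))); rewrite addr0 -E.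
Qed.

Lemma addmap_bsum (R : pzRingType) (V : bimod R) (G : zmodType) (f : V -> G)
  (s : seq V) : (forall u v, f (badd u v) = f u + f v) ->
  f (bsum s) = \sum_(x <- s) f x.
Proof.
move=> Hf; elim: s => [|x s IH] /=; first by rewrite big_nil (addmap0 Hf).
by rewrite big_cons Hf IH.
Qed.

Lemma addmap_bsum_map (R : pzRingType) (V : bimod R) (G : zmodType) (f : V -> G)
  (I : Type) (s : seq I) (g : I -> V) : (forall u v, f (badd u v) = f u + f v) ->
  f (bsum [seq g i | i <- s]) = \sum_(i <- s) f (g i).
Proof. by move=> Hf; rewrite addmap_bsum // big_map. Qed.


Section Ring.
Variables (R : pzRingType) (HR : semisimple_ring R).

Lemma regular_el (a : R) : exists h, h * h = h /\ a = h * a /\ exists z, h = a * z.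
Proof.
have HI : left_ideal (fun x : R => exists y, x = y * a).
  split; first by exists 0; rewrite mul0r.
  split; first by move=> x y [x' ->] [y' ->]; exists (x' + y'); rewrite mulrDl.
  by move=> r x [x' ->]; exists (r * x'); rewrite mulrA.
have [J [HJ [Hint Hsum]]] := HR HI.
have [u [t [[b ->] [Jt E1]]]] := Hsum 1.
have tE : t = 1 - b * a by rewrite E1 [b * a + t]addrC addrK.
have at0 : a * t = 0.
  apply: Hint; last by case: HJ => _ [_]; apply.
  exists (1 - a * b); rewrite mulrBl mul1r -mulrA.
  by rewrite tE mulrBr mulr1.
have aba : a = a * b * a.
  rewrite -mulrA; have -> : b * a = 1 - t by rewrite tE opprB addrC addrNK.
  by rewrite mulrBr mulr1 at0 subr0.
exists (a * b); split; first by rewrite mulrA -aba.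
by split; [exact: aba | exists b].
Qed.

Lemma right_split (I : R -> Prop) : I 0 -> (forall x y, I x -> I y -> I (x + y)) ->
  (forall x r, I x -> I (x * r)) ->
  exists k, (forall r, I r -> k * r = 0) /\ (forall r, I (r - k * r)).
Proof.
move=> I0 Iadd Imul.
have Iopp x : I x -> I (- x) by move=> Ix; rewrite -mulrN1; apply: (Imul).
suff [g [gg [Ig Hg]]] : exists g, g * g = g /\ I g /\ (forall a, I a -> a = g * a).
  exists (1 - g); split.
    by move=> r Ir; rewrite mulrBl mul1r -Hg // subrr.
  by move=> r; rewrite mulrBl mul1r opprB addrC addrNK; apply: (Imul).
apply: NNPP => Hn.
pose Q g g' := g' * g' = g' /\ I g' /\ g = g * g' /\
   exists h, h = h * g' /\ h <> h * g.
have step g : g * g = g -> I g -> exists g', Q g g'.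
  move=> gg Ig.
  have [a [Ia nea]] : exists a, I a /\ a <> g * a.
    apply: NNPP => H; apply: Hn; exists g; split=> //; split=> //.
    by move=> a Ia; apply: NNPP => H'; apply: H; exists a.
  pose a' := a - g * a.
  have Ia' : I a' by apply: (Iadd) => //; apply: (Iopp); apply: (Imul).
  have ga' : g * a' = 0 by rewrite /a' mulrBr mulrA gg subrr.
  have a'0 : a' <> 0 by move/eqP; rewrite subr_eq0 => /eqP.
  have [h [hh [ha [z hz]]]] := regular_el a'.
  have gh : g * h = 0 by rewrite hz mulrA ga' mul0r.
  have Ih : I h by rewrite hz; apply: (Imul).
  have h0 : h <> 0 by move=> h0; apply: a'0; rewrite ha h0 mul0r.
  exists (g + h - h * g); split.
    rewrite !mulrDl !mulrDr !mulrN !mulNr gg gh hh.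
    have e1 : g * (h * g) = 0 by rewrite mulrA gh mul0r.
    have e2 : h * (h * g) = h * g by rewrite mulrA hh.
    have e3 : h * g * g = h * g by rewrite -mulrA gg.
    have e4 : h * g * h = 0 by rewrite -mulrA gh mulr0.
    have e5 : h * g * (h * g) = 0 by rewrite mulrA e4 mul0r.
    by rewrite e1 e2 e3 e4 e5 !oppr0 !addr0 [h * g + h]addrC addrK.
  split.
    by apply: (Iadd); [apply: (Iadd) | apply: (Iopp); apply: (Imul) Ih].
  split.
    by rewrite !mulrDr mulrN mulrA gh mul0r gg oppr0 !addr0.
  exists h; split.
    by rewrite !mulrDr mulrN mulrA hh [h * g + h]addrC addrK.
  move=> E; apply: h0; by rewrite -hh {1}E -mulrA gh mulr0.
pose next g := epsilon (inhabits 0) (Q g).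
pose gs n := iter n next 0.
have inv n : gs n * gs n = gs n /\ I (gs n) /\ Q (gs n) (gs n.+1).
  elim: n => [|n [g1 [g2 g3]]].
    have H : Q 0 (next 0).
      by apply: epsilon_spec; apply: step; rewrite ?mul0r.
    by rewrite /= mul0r.
  case: g3 => [q1 [q2 q3]]; split=> //; split=> //.
  by apply: epsilon_spec; apply: step.
have mono n k : gs n = gs n * gs (n + k)%N.
  elim: k => [|k IH]; first by rewrite addn0 (proj1 (inv n)).
  have [_ [_ [_ [_ [E _]]]]] := inv (n + k)%N.
  by rewrite addnS {1}IH {1}E mulrA -IH.
have Uadd x y n m : x = x * gs n -> y = y * gs m ->
    x + y = (x + y) * gs (maxn n m).
  move=> xn ym.
  have E1 : x = x * gs (maxn n m).
    by rewrite xn -mulrA -(subnKC (leq_maxl n m)) -mono.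
  have E2 : y = y * gs (maxn n m).
    by rewrite ym -mulrA -(subnKC (leq_maxr n m)) -mono.
  by rewrite mulrDl -E1 -E2.
have HU : left_ideal (fun x => exists n, x = x * gs n).
  split; first by exists 0%N; rewrite mul0r.
  split; first by move=> x y [n xn] [m ym]; exists (maxn n m); apply: Uadd.
  by move=> r x [n xn]; exists n; rewrite -mulrA -xn.
have [J [HJ [Hint Hsum]]] := HR HU.
have [u [t [[N uN] [Jt E1]]]] := Hsum 1.
have key x n : x = x * gs n -> x = x * u.
  move=> xn.
  have : x * t = 0.
    apply: Hint; last by case: HJ => _ [_]; apply.
    have -> : x * t = x + - (x * u).
      have tE : t = 1 - u by rewrite E1 [u + t]addrC addrK.
      by rewrite tE mulrBr mulr1.
    exists (maxn n N); apply: Uadd => //.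
    by rewrite mulNr -mulrA -uN.
  by move=> xt; rewrite -[x in LHS]mulr1 E1 mulrDr xt addr0.
have [_ [_ [_ [_ [_ [h [hE hne]]]]]]] := inv N.
apply: hne; have hu := key _ _ hE.
by rewrite hu -mulrA -uN.
Qed.
End Ring.


Fixpoint lall (X : Type) (P : X -> Prop) (s : seq X) : Prop :=
  if s is x :: s' then P x /\ lall P s' else True.

Lemma lall_map (X Y : Type) (P : Y -> Prop) (f : X -> Y) (s : seq X) :
  (forall x, P (f x)) -> lall P (map f s).
Proof. by move=> H; elim: s => //= x s ->; split. Qed.

Section LeftBasis.
Variables (R : pzRingType) (HR : semisimple_ring R) (V : bimod R).
Let L := blaws V.

Fixpoint lspan (s : seq V) (v : V) : Prop :=
  if s is m :: s' then exists r n, lspan s' n /\ v = badd (blact r m) n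
  else v = bzero V.

Lemma lspan0 s : lspan s (bzero V).
Proof.
elim: s => //= m s IH; exists 0, (bzero V); split=> //.
by rewrite blact0 (Defs.add0 L).
Qed.

Lemma lspanD s u v : lspan s u -> lspan s v -> lspan s (badd u v).
Proof.
elim: s u v => [|m s IH] u v /=; first by move=> -> ->; rewrite (Defs.add0 L).
move=> [r [n [Hn ->]]] [r' [n' [Hn' ->]]]; exists (r + r'), (badd n n').
by split; [exact: IH | rewrite baddACA (Defs.lactDr L)].
Qed.

Lemma lspanZ s r v : lspan s v -> lspan s (blact r v).
Proof.
elim: s v => [|m s IH] v /=; first by move=> ->; rewrite blactr0.
move=> [r' [n [Hn ->]]]; exists (r * r'), (blact r n).
by split; [exact: IH | rewrite (Defs.lactDv L) (Defs.lactM L)].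
Qed.

Definition lin_on (S : V -> Prop) (f : V -> R) : Prop :=
  (forall u v, S u -> S v -> f (badd u v) = f u + f v) /\
  (forall r v, S v -> f (blact r v) = r * f v).

Lemma lbasis_span (s : seq V) : exists bs : seq (V * (V -> R)),
  lall (fun x => lin_on (lspan s) x.2) bs /\
  forall v, lspan s v -> v = bsum [seq blact (x.2 v) x.1 | x <- bs].
Proof.
elim: s => [|m s [bs [Hlin Hbs]]].
  by exists [::]; split=> // v /= ->.
pose I r := lspan s (blact r m).
have HI : left_ideal I.
  split; first by rewrite /I blact0; exact: lspan0.
  split; first by move=> x y Ix Iy; rewrite /I (Defs.lactDr L); exact: lspanD.
  by move=> r x Ix; rewrite /I (Defs.lactM L); exact: lspanZ.
have [J [HJ [Hint Hsum]]] := HR HI.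
have [i [j [Ii [Jj E1]]]] := Hsum 1.
have Ij x : I x -> x * j = 0.
  move=> Ix; apply: Hint; last by case: HJ => _ [_]; apply.
  have -> : x * j = x + (-1) * (x * i).
    have jE : j = 1 - i by rewrite E1 addrC addKr.
    by rewrite mulN1r jE mulrBr mulr1.
  case: HI => _ [HIa HIm]; apply: HIa => //; apply: (HIm); exact: (HIm _ _ Ii).
have uniq r n r' n' : lspan s n -> lspan s n' ->
    badd (blact r m) n = badd (blact r' m) n' -> r * j = r' * j.
  move=> Hn Hn' E.
  have : I (r - r'); rewrite /I.
    have -> : blact (r - r') m = badd n' (blact (-1) n).
      apply: (@baddI _ _ _ _ (badd (blact r' m) n)).
      rewrite (Defs.addA L) -(Defs.lactDr L) subrK E.
      rewrite baddACA -{2}[n](Defs.lact1 L) -(Defs.lactDr L) addNr blact0 badd0.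
      by rewrite (Defs.addC L).
    by apply: lspanD => //; apply: lspanZ.
  by move/Ij => /eqP; rewrite mulrBl subr_eq0 => /eqP.
pose P v (rn : R * V) := lspan s rn.2 /\ v = badd (blact rn.1 m) rn.2.
pose c v := epsilon (inhabits (0, bzero V)) (P v).
have cP v : lspan (m :: s) v -> P v (c v).
  by move=> [r [n [Hn E]]]; apply: epsilon_spec; exists (r, n).
pose f v := (c v).1 * j.
pose rho v := badd (blact ((c v).1 * i) m) (c v).2.
have rho_sp v : lspan (m :: s) v -> lspan s (rho v).
  move/cP => [Hn _]; apply: lspanD => //.
  by case: HI => _ [_ HIm]; apply: HIm.
have dec v : lspan (m :: s) v -> v = badd (rho v) (blact (f v) m).
  move/cP => [Hn E]; rewrite {1}E /rho /f -(Defs.addA L) [badd (c v).2 _](Defs.addC L).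
  rewrite (Defs.addA L) -(Defs.lactDr L) -mulrDr -E1 mulr1 //.
have fD u v : lspan (m :: s) u -> lspan (m :: s) v -> f (badd u v) = f u + f v.
  move=> Hu Hv; have := cP _ (lspanD Hu Hv); move=> [Hw Ew].
  have [Hu' Eu] := cP _ Hu; have [Hv' Ev] := cP _ Hv.
  rewrite /f -mulrDl; apply: (uniq _ _ _ _ Hw (lspanD Hu' Hv')).
  by rewrite -Ew {1}Eu {1}Ev baddACA (Defs.lactDr L).
have fZ r v : lspan (m :: s) v -> f (blact r v) = r * f v.
  move=> Hv; have := cP _ (lspanZ r Hv); move=> [Hw Ew].
  have [Hv' Ev] := cP _ Hv.
  rewrite /f mulrA; apply: (uniq _ _ _ _ Hw (lspanZ r Hv')).
  by rewrite -Ew {1}Ev (Defs.lactDv L) (Defs.lactM L).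
have rhoD u v : lspan (m :: s) u -> lspan (m :: s) v ->
    rho (badd u v) = badd (rho u) (rho v).
  move=> Hu Hv; apply: (@baddI _ _ _ _ (blact (f (badd u v)) m)).
  rewrite -dec; last exact: lspanD.
  by rewrite fD // (Defs.lactDr L) baddACA -!dec.
have rhoZ r v : lspan (m :: s) v -> rho (blact r v) = blact r (rho v).
  move=> Hv; apply: (@baddI _ _ _ _ (blact (f (blact r v)) m)).
  rewrite -dec; last exact: lspanZ.
  by rewrite fZ // (Defs.lactM L) -(Defs.lactDv L) -dec.
exists ((m, f) :: [seq (x.1, fun v => x.2 (rho v)) | x <- bs]); split.
  split; first by split; [exact: fD | exact: fZ].
  elim: bs Hlin {Hbs} => //= x bs IH [[H1 H2] Hl]; split; last exact: IH.
  split.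
    by move=> u v Hu Hv; rewrite rhoD // H1 //; apply: rho_sp.
  by move=> r v Hv; rewrite rhoZ // H2 //; apply: rho_sp.
move=> v Hv /=; rewrite -map_comp /comp /=.
rewrite (Defs.addC L) -(Hbs _ (rho_sp _ Hv)); exact: dec.
Qed.

Lemma lspan_fg (s : seq V) (rs : seq R) : size rs = size s ->
  lspan s (bsum [seq blact x.1 x.2 | x <- zip rs s]).
Proof.
elim: s rs => [|m s IH] [|r rs] //= [E]; exists r, (bsum [seq blact x.1 x.2 | x <- zip rs s]).
by split=> //; exact: IH.
Qed.

Lemma ldual_basis : left_fg V -> exists bs : seq (V * ldual V),
  forall v, v = bsum [seq blact (ldev x.2 v) x.1 | x <- bs].
Proof.
move=> [s Hs].
have Hall v : lspan s v by have [rs [E ->]] := Hs v; exact: lspan_fg.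
have [bs [Hlin Hbs]] := lbasis_span s.
pose mk (x : V * (V -> R)) : V * ldual V :=
  (x.1, match excluded_middle_informative (left_lin x.2) with
        | left H => exist _ x.2 H | right _ => ld0 V end).
exists (map mk bs) => v; rewrite -map_comp {1}(Hbs v (Hall v)).
congr bsum; elim: bs Hlin {Hbs} => //= x bs IH [[H1 H2] Hl]; rewrite IH //.
congr (_ :: _); rewrite /mk /=.
case: excluded_middle_informative => // H; exfalso; apply: H.
by split=> [u w|r w]; [apply: H1 | apply: H2].
Qed.
End LeftBasis.

Section RightBasis.
Variables (R : pzRingType) (HR : semisimple_ring R) (V : bimod R).
Let L := blaws V.

Fixpoint rspan (s : seq V) (v : V) : Prop :=
  if s is m :: s' then exists r n, rspan s' n /\ v = badd (bract m r) n
  else v = bzero V.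

Lemma rspan0 s : rspan s (bzero V).
Proof.
elim: s => //= m s IH; exists 0, (bzero V); split=> //.
by rewrite bract0 (Defs.add0 L).
Qed.

Lemma rspanD s u v : rspan s u -> rspan s v -> rspan s (badd u v).
Proof.
elim: s u v => [|m s IH] u v /=; first by move=> -> ->; rewrite (Defs.add0 L).
move=> [r [n [Hn ->]]] [r' [n' [Hn' ->]]]; exists (r + r'), (badd n n').
by split; [exact: IH | rewrite baddACA (Defs.ractDr L)].
Qed.

Lemma rspanZ s r v : rspan s v -> rspan s (bract v r).
Proof.
elim: s v => [|m s IH] v /=; first by move=> ->; rewrite bract0v.
move=> [r' [n [Hn ->]]]; exists (r' * r), (bract n r).
by split; [exact: IH | rewrite (Defs.ractDv L) (Defs.ractM L)].
Qed.

Definition rin_on (S : V -> Prop) (f : V -> R) : Prop :=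
  (forall u v, S u -> S v -> f (badd u v) = f u + f v) /\
  (forall r v, S v -> f (bract v r) = f v * r).

Lemma rbasis_span (s : seq V) : exists bs : seq (V * (V -> R)),
  lall (fun x => rin_on (rspan s) x.2) bs /\
  forall v, rspan s v -> v = bsum [seq bract x.1 (x.2 v) | x <- bs].
Proof.
elim: s => [|m s [bs [Hlin Hbs]]].
  by exists [::]; split=> // v /= ->.
pose I r := rspan s (bract m r).
have [k [Ik Ik2]] : exists k, (forall r, I r -> k * r = 0) /\ (forall r, I (r - k * r)).
  apply: right_split => //.
  - by rewrite /I bract0; exact: rspan0.
  - by move=> x y Ix Iy; rewrite /I (Defs.ractDr L); exact: rspanD.
  - by move=> x r Ix; rewrite /I (Defs.ractM L); exact: rspanZ.
have uniq r n r' n' : rspan s n -> rspan s n' ->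
    badd (bract m r) n = badd (bract m r') n' -> k * r = k * r'.
  move=> Hn Hn' E.
  have : I (r - r'); rewrite /I.
    have -> : bract m (r - r') = badd n' (bract n (-1)).
      apply: (@baddI _ _ _ _ (badd (bract m r') n)).
      rewrite (Defs.addA L) -(Defs.ractDr L) subrK E.
      rewrite baddACA -{2}[n](Defs.ract1 L) -(Defs.ractDr L) addNr bract0 badd0.
      by rewrite (Defs.addC L).
    by apply: rspanD => //; apply: rspanZ.
  by move/Ik => /eqP; rewrite mulrBr subr_eq0 => /eqP.
pose P v (rn : R * V) := rspan s rn.2 /\ v = badd (bract m rn.1) rn.2.
pose c v := epsilon (inhabits (0, bzero V)) (P v).
have cP v : rspan (m :: s) v -> P v (c v).
  by move=> [r [n [Hn E]]]; apply: epsilon_spec; exists (r, n).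
pose f v := k * (c v).1.
pose rho v := badd (bract m ((c v).1 - k * (c v).1)) (c v).2.
have rho_sp v : rspan (m :: s) v -> rspan s (rho v).
  by move/cP => [Hn _]; apply: rspanD => //; exact: Ik2.
have dec v : rspan (m :: s) v -> v = badd (rho v) (bract m (f v)).
  move/cP => [Hn E]; rewrite {1}E /rho /f -(Defs.addA L) [badd (c v).2 _](Defs.addC L).
  by rewrite (Defs.addA L) -(Defs.ractDr L) subrK.
have fD u v : rspan (m :: s) u -> rspan (m :: s) v -> f (badd u v) = f u + f v.
  move=> Hu Hv; have := cP _ (rspanD Hu Hv); move=> [Hw Ew].
  have [Hu' Eu] := cP _ Hu; have [Hv' Ev] := cP _ Hv.
  rewrite /f -mulrDr; apply: (uniq _ _ _ _ Hw (rspanD Hu' Hv')).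
  by rewrite -Ew {1}Eu {1}Ev baddACA (Defs.ractDr L).
have fZ r v : rspan (m :: s) v -> f (bract v r) = f v * r.
  move=> Hv; have := cP _ (rspanZ r Hv); move=> [Hw Ew].
  have [Hv' Ev] := cP _ Hv.
  rewrite /f -mulrA; apply: (uniq _ _ _ _ Hw (rspanZ r Hv')).
  by rewrite -Ew {1}Ev (Defs.ractDv L) (Defs.ractM L).
have rhoD u v : rspan (m :: s) u -> rspan (m :: s) v ->
    rho (badd u v) = badd (rho u) (rho v).
  move=> Hu Hv; apply: (@baddI _ _ _ _ (bract m (f (badd u v)))).
  rewrite -dec; last exact: rspanD.
  by rewrite fD // (Defs.ractDr L) baddACA -!dec.
have rhoZ r v : rspan (m :: s) v -> rho (bract v r) = bract (rho v) r.
  move=> Hv; apply: (@baddI _ _ _ _ (bract m (f (bract v r)))).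
  rewrite -dec; last exact: rspanZ.
  by rewrite fZ // (Defs.ractM L) -(Defs.ractDv L) -dec.
exists ((m, f) :: [seq (x.1, fun v => x.2 (rho v)) | x <- bs]); split.
  split; first by split; [exact: fD | exact: fZ].
  elim: bs Hlin {Hbs} => //= x bs IH [[H1 H2] Hl]; split; last exact: IH.
  split.
    by move=> u v Hu Hv; rewrite rhoD // H1 //; apply: rho_sp.
  by move=> r v Hv; rewrite rhoZ // H2 //; apply: rho_sp.
move=> v Hv /=; rewrite -map_comp /comp /=.
rewrite (Defs.addC L) -(Hbs _ (rho_sp _ Hv)); exact: dec.
Qed.

Lemma rspan_fg (s : seq V) (rs : seq R) : size rs = size s ->
  rspan s (bsum [seq bract x.2 x.1 | x <- zip rs s]).
Proof.
elim: s rs => [|m s IH] [|r rs] //= [E]; exists r, (bsum [seq bract x.2 x.1 | x <- zip rs s]).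
by split=> //; exact: IH.
Qed.

Lemma rdual_basis : right_fg V -> exists bs : seq (V * rdual V),
  forall v, v = bsum [seq bract x.1 (rdev x.2 v) | x <- bs].
Proof.
move=> [s Hs].
have Hall v : rspan s v by have [rs [E ->]] := Hs v; exact: rspan_fg.
have [bs [Hlin Hbs]] := rbasis_span s.
pose mk (x : V * (V -> R)) : V * rdual V :=
  (x.1, match excluded_middle_informative (right_lin x.2) with
        | left H => exist _ x.2 H | right _ => rd0 V end).
exists (map mk bs) => v; rewrite -map_comp {1}(Hbs v (Hall v)).
congr bsum; elim: bs Hlin {Hbs} => //= x bs IH [[H1 H2] Hl]; rewrite IH //.
congr (_ :: _); rewrite /mk /=.
case: excluded_middle_informative => // H; exfalso; apply: H.
by split=> [u w|r w]; [apply: H1 | apply: H2].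
Qed.
End RightBasis.


Section LDualLemmas.
Variable R : pzRingType.

Lemma ldev_lD (V : bimod R) (f : ldual V) u v : ldev f (badd u v) = ldev f u + ldev f v.
Proof. by case: f => f [H1 H2]; apply: H1. Qed.
Lemma ldev_lZ (V : bimod R) (f : ldual V) r v : ldev f (blact r v) = r * ldev f v.
Proof. by case: f => f [H1 H2]; apply: H2. Qed.
Lemma ldev_vsum (V : bimod R) (f : ldual V) (s : seq V) :
  ldev f (bsum s) = \sum_(x <- s) ldev f x.
Proof. by apply: addmap_bsum => u v; apply: ldev_lD. Qed.
Lemma ldev_bsum (V : bimod R) (s : seq (ldual V)) v :
  ldev (bsum s) v = \sum_(f <- s) ldev f v.
Proof. by elim: s => [|f s IH]; rewrite ?big_nil ?big_cons //= -IH. Qed.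
Lemma ldext (V : bimod R) (f g : ldual V) : (forall v, ldev f v = ldev g v) -> f = g.
Proof. exact: ldual_eq. Qed.

Lemma ld_expand (V : bimod R) (bs : seq (V * ldual V))
  (Hbs : forall v, v = bsum [seq blact (ldev x.2 v) x.1 | x <- bs]) (g : ldual V) :
  g = bsum [seq blact (ldev g x.1 : R^c) x.2 | x <- bs].
Proof.
apply: ldext => v; rewrite ldev_bsum big_map {1}(Hbs v) ldev_vsum big_map.
by apply: eq_bigr => x _; rewrite ldev_lZ.
Qed.

Lemma ldev_gcast (F : nat -> bimod R) m n (e : m = n) (a : ldual (F m)) v :
  ldev (gcast (fun k => ldual (F k) : Type) e a) v
  = ldev a (gcast (fun k => F k : Type) (esym e) v).
Proof. by move: v; case: n / e. Qed.

Lemma gcast_irr (F : nat -> Type) m n (e1 e2 : m = n) x : gcast F e1 x = gcast F e2 x.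
Proof. by rewrite (eq_irrelevance e1 e2). Qed.

Lemma lteq_red (M N : bimod R) (bN : seq (N * ldual N))
  (HbN : forall v, v = bsum [seq blact (ldev x.2 v) x.1 | x <- bN])
  (s t : seq (ldual M * ldual N)) :
  (forall m n, \sum_(x <- s) ldev x.1 (bract m (ldev x.2 n))
             = \sum_(x <- t) ldev x.1 (bract m (ldev x.2 n))) -> teq s t.
Proof.
move=> H G F [F1 [F2 F3]].
have red (u : seq (ldual M * ldual N)) : \sum_(x <- u) F x.1 x.2 =
    \sum_(e <- bN) F (bsum [seq bract x.1 (ldev x.2 e.1 : R^c) | x <- u]) e.2.
  transitivity (\sum_(x <- u) \sum_(e <- bN) F (bract x.1 (ldev x.2 e.1 : R^c)) e.2).
    apply: eq_bigr => x _; rewrite {1}(ld_expand HbN x.2).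
    rewrite (addmap_bsum_map (f := F x.1)) //.
    by apply: eq_bigr => e _; rewrite F3.
  rewrite exchange_big; apply: eq_bigr => e _.
  by rewrite (addmap_bsum_map (f := fun m => F m e.2)).
rewrite !red; apply: eq_bigr => e _; congr F; apply: ldext => m.
by rewrite !ldev_bsum !big_map; exact: H.
Qed.

Lemma lteq3_red (M N P : bimod R) (bN : seq (N * ldual N)) (bP : seq (P * ldual P))
  (HbN : forall v, v = bsum [seq blact (ldev x.2 v) x.1 | x <- bN])
  (HbP : forall v, v = bsum [seq blact (ldev x.2 v) x.1 | x <- bP])
  (s t : seq (ldual M * ldual N * ldual P)) :
  (forall m n p, \sum_(x <- s) ldev x.1.1 (bract m (ldev x.1.2 (bract n (ldev x.2 p))))
             = \sum_(x <- t) ldev x.1.1 (bract m (ldev x.1.2 (bract n (ldev x.2 p))))) ->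
  teq3 s t.
Proof.
move=> H G F [F1 [F2 [F3 [F4 F5]]]].
have red (u : seq (ldual M * ldual N * ldual P)) : \sum_(x <- u) F x.1.1 x.1.2 x.2 =
    \sum_(c <- bP) \sum_(b <- bN)
      F (bsum [seq bract x.1.1 (ldev x.1.2 (bract b.1 (ldev x.2 c.1)) : R^c) | x <- u]) b.2 c.2.
  transitivity (\sum_(x <- u) \sum_(c <- bP) \sum_(b <- bN)
      F (bract x.1.1 (ldev x.1.2 (bract b.1 (ldev x.2 c.1)) : R^c)) b.2 c.2).
    apply: eq_bigr => x _; rewrite {1}(ld_expand HbP x.2).
    rewrite (addmap_bsum_map (f := F x.1.1 x.1.2)) //.
    apply: eq_bigr => c _; rewrite -F5 {1}(ld_expand HbN (bract x.1.2 _)).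
    rewrite (addmap_bsum_map (f := fun n => F x.1.1 n c.2)) //.
    by apply: eq_bigr => b _; rewrite F4.
  rewrite exchange_big; apply: eq_bigr => c _; rewrite exchange_big.
  apply: eq_bigr => b _.
  by rewrite (addmap_bsum_map (f := fun m => F m b.2 c.2)).
rewrite !red; apply: eq_bigr => c _; apply: eq_bigr => b _; congr F.
apply: ldext => m; rewrite !ldev_bsum !big_map; exact: H.
Qed.
End LDualLemmas.

Section RDualLemmas.
Variable R : pzRingType.

Lemma rdev_rD (V : bimod R) (f : rdual V) u v : rdev f (badd u v) = rdev f u + rdev f v.
Proof. by case: f => f [H1 H2]; apply: H1. Qed.
Lemma rdev_rZ (V : bimod R) (f : rdual V) r v : rdev f (bract v r) = rdev f v * r.
Proof. by case: f => f [H1 H2]; apply: H2. Qed.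
Lemma rdev_vsum (V : bimod R) (f : rdual V) (s : seq V) :
  rdev f (bsum s) = \sum_(x <- s) rdev f x.
Proof. by apply: addmap_bsum => u v; apply: rdev_rD. Qed.
Lemma rdev_bsum (V : bimod R) (s : seq (rdual V)) v :
  rdev (bsum s) v = \sum_(f <- s) rdev f v.
Proof. by elim: s => [|f s IH]; rewrite ?big_nil ?big_cons //= -IH. Qed.
Lemma rdext (V : bimod R) (f g : rdual V) : (forall v, rdev f v = rdev g v) -> f = g.
Proof. exact: rdual_eq. Qed.

Lemma rd_expand (V : bimod R) (bs : seq (V * rdual V))
  (Hbs : forall v, v = bsum [seq bract x.1 (rdev x.2 v) | x <- bs]) (g : rdual V) :
  g = bsum [seq bract x.2 (rdev g x.1 : R^c) | x <- bs].
Proof.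
apply: rdext => v; rewrite rdev_bsum big_map {1}(Hbs v) rdev_vsum big_map.
by apply: eq_bigr => x _; rewrite rdev_rZ.
Qed.

Lemma rdev_gcast (F : nat -> bimod R) m n (e : m = n) (a : rdual (F m)) v :
  rdev (gcast (fun k => rdual (F k) : Type) e a) v
  = rdev a (gcast (fun k => F k : Type) (esym e) v).
Proof. by move: v; case: n / e. Qed.

Lemma rteq_red (M N : bimod R) (bM : seq (M * rdual M))
  (HbM : forall v, v = bsum [seq bract x.1 (rdev x.2 v) | x <- bM])
  (s t : seq (rdual M * rdual N)) :
  (forall m n, \sum_(x <- s) rdev x.2 (blact (rdev x.1 m) n)
             = \sum_(x <- t) rdev x.2 (blact (rdev x.1 m) n)) -> teq s t.
Proof.
move=> H G F [F1 [F2 F3]].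
have red (u : seq (rdual M * rdual N)) : \sum_(x <- u) F x.1 x.2 =
    \sum_(e <- bM) F e.2 (bsum [seq blact (rdev x.1 e.1 : R^c) x.2 | x <- u]).
  transitivity (\sum_(x <- u) \sum_(e <- bM) F e.2 (blact (rdev x.1 e.1 : R^c) x.2)).
    apply: eq_bigr => x _; rewrite {1}(rd_expand HbM x.1).
    rewrite (addmap_bsum_map (f := fun m => F m x.2)) //.
    by apply: eq_bigr => e _; rewrite F3.
  rewrite exchange_big; apply: eq_bigr => e _.
  by rewrite (addmap_bsum_map (f := F e.2)).
rewrite !red; apply: eq_bigr => e _; congr F; apply: rdext => n.
by rewrite !rdev_bsum !big_map; exact: H.
Qed.

Lemma rteq3_red (M N P : bimod R) (bM : seq (M * rdual M)) (bN : seq (N * rdual N))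
  (HbM : forall v, v = bsum [seq bract x.1 (rdev x.2 v) | x <- bM])
  (HbN : forall v, v = bsum [seq bract x.1 (rdev x.2 v) | x <- bN])
  (s t : seq (rdual M * rdual N * rdual P)) :
  (forall m n p, \sum_(x <- s) rdev x.2 (blact (rdev x.1.2 (blact (rdev x.1.1 m) n)) p)
             = \sum_(x <- t) rdev x.2 (blact (rdev x.1.2 (blact (rdev x.1.1 m) n)) p)) ->
  teq3 s t.
Proof.
move=> H G F [F1 [F2 [F3 [F4 F5]]]].
have red (u : seq (rdual M * rdual N * rdual P)) : \sum_(x <- u) F x.1.1 x.1.2 x.2 =
    \sum_(e <- bM) \sum_(f <- bN)
      F e.2 f.2 (bsum [seq blact (rdev x.1.2 (blact (rdev x.1.1 e.1) f.1) : R^c) x.2 | x <- u]).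
  transitivity (\sum_(x <- u) \sum_(e <- bM) \sum_(f <- bN)
      F e.2 f.2 (blact (rdev x.1.2 (blact (rdev x.1.1 e.1) f.1) : R^c) x.2)).
    apply: eq_bigr => x _; rewrite {1}(rd_expand HbM x.1.1).
    rewrite (addmap_bsum_map (f := fun m => F m x.1.2 x.2)) //.
    apply: eq_bigr => e _; rewrite F4 {1}(rd_expand HbN (blact _ x.1.2)).
    rewrite (addmap_bsum_map (f := fun n => F e.2 n x.2)) //.
    by apply: eq_bigr => f _; rewrite F5.
  rewrite exchange_big; apply: eq_bigr => e _; rewrite exchange_big.
  apply: eq_bigr => f _.
  by rewrite (addmap_bsum_map (f := F e.2 f.2)).
rewrite !red; apply: eq_bigr => e _; apply: eq_bigr => f _; congr F.
apply: rdext => p; rewrite !rdev_bsum !big_map; exact: H.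
Qed.
End RDualLemmas.


Lemma sum_morph (R : pzRingType) (G : zmodType) (g : R -> G) (I : Type) (s : seq I)
  (F : I -> R) : (forall x y, g (x + y) = g x + g y) ->
  g (\sum_(i <- s) F i) = \sum_(i <- s) g (F i).
Proof.
move=> gD; have g0 : g 0 = 0.
  by apply: (@addrI _ (g 0)); rewrite -gD !addr0.
by apply: big_morph.
Qed.

Lemma teq_use (R : pzRingType) (M N : bimod R) (s t : seq (M * N)) (G : zmodType)
  (f : M -> N -> G) : teq s t -> balanced2 f ->
  \sum_(x <- s) f x.1 x.2 = \sum_(x <- t) f x.1 x.2.
Proof. by move=> H; apply: H. Qed.

Lemma teq3_use (R : pzRingType) (M N P : bimod R) (s t : seq (M * N * P)) (G : zmodType)
  (f : M -> N -> P -> G) : teq3 s t -> balanced3 f ->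
  \sum_(x <- s) f x.1.1 x.1.2 x.2 = \sum_(x <- t) f x.1.1 x.1.2 x.2.
Proof. by move=> H; apply: H. Qed.

Section LeftPart.
Variables (R : pzRingType) (A : nat -> bimod R)
  (mulA : forall p q, A p -> A q -> A (p + q)%N) (etaA : R -> A 0%N)
  (C : nat -> bimod R) (delC : forall p q, C (p + q)%N -> seq (C p * C q))
  (epsC : C 0%N -> R) (theta : C 1%N -> A 1%N).
Hypothesis HAC : almost_koszul mulA etaA delC epsC theta.
Variable bas : forall n, seq (A n * ldual (A n)).
Hypothesis Hbas : forall n v, v = bsum [seq blact (ldev x.2 v) x.1 | x <- bas n].

Let HA := proj1 HAC.
Let HC := proj1 (proj2 HAC).
Let Hth := proj1 (proj2 (proj2 HAC)).
Let Hthb := proj1 (proj2 (proj2 (proj2 HAC))).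
Let Hk := proj2 (proj2 (proj2 (proj2 HAC))).
Let mDl := proj1 HA.
Let mDr := proj1 (proj2 HA).
Let mB := proj1 (proj2 (proj2 HA)).
Let mLl := proj1 (proj2 (proj2 (proj2 HA))).
Let mRr := proj1 (proj2 (proj2 (proj2 (proj2 HA)))).
Let mAs := proj1 (proj2 (proj2 (proj2 (proj2 (proj2 HA))))).
Let etam := proj1 (proj2 (proj2 (proj2 (proj2 (proj2 (proj2 HA)))))).
Let etab := proj1 (proj2 (proj2 (proj2 (proj2 (proj2 (proj2 (proj2 HA))))))).
Let eta1l := proj1 (proj2 (proj2 (proj2 (proj2 (proj2 (proj2 (proj2 (proj2 HA)))))))).
Let eta1r := proj2 (proj2 (proj2 (proj2 (proj2 (proj2 (proj2 (proj2 (proj2 HA)))))))).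
Let dD := proj1 HC.
Let dL := proj1 (proj2 HC).
Let dR := proj1 (proj2 (proj2 HC)).
Let dAs := proj1 (proj2 (proj2 (proj2 HC))).
Let epsm := proj1 (proj2 (proj2 (proj2 (proj2 HC)))).
Let epsb := proj1 (proj2 (proj2 (proj2 (proj2 (proj2 HC))))).
Let eps1l := proj1 (proj2 (proj2 (proj2 (proj2 (proj2 (proj2 HC)))))).
Let eps1r := proj2 (proj2 (proj2 (proj2 (proj2 (proj2 (proj2 HC)))))).

Lemma ldevD (V : bimod R) (f g : ldual V) v : ldev (badd f g) v = ldev f v + ldev g v.
Proof. by []. Qed.
Lemma ldevZl (V : bimod R) (r : R^c) (f : ldual V) v : ldev (blact r f) v = ldev f v * r.
Proof. by []. Qed.
Lemma ldevZr (V : bimod R) (r : R^c) (f : ldual V) v :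
  ldev (bract f r) v = ldev f (bract v (r : R)).
Proof. by []. Qed.
Lemma ldev0 (V : bimod R) v : ldev (bzero (ldual V)) v = 0.
Proof. by []. Qed.
Lemma ldev_v0 (V : bimod R) (f : ldual V) : ldev f (bzero V) = 0.
Proof. by apply: addmap0 => u v; apply: ldev_lD. Qed.

Lemma bal_ab p q (a : ldual (C p)) (b : ldual (C q)) :
  balanced2 (G := R) (fun u v => ldev a (bract u (ldev b v))).
Proof.
split; first by move=> m m' n; rewrite (Defs.ractDv (blaws _)) ldev_lD.
split; first by move=> m n n'; rewrite ldev_lD (Defs.ractDr (blaws _)) ldev_lD.
by move=> m r n; rewrite -(Defs.ractM (blaws _)) ldev_lZ.
Qed.

Definition mulD_fun p q (a : ldual (C p)) (b : ldual (C q)) (c : C (p + q)%N) : R :=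
  \sum_(x <- @delC p q c) ldev a (bract x.1 (ldev b x.2)).

Lemma mulD_lin p q a b : left_lin (@mulD_fun p q a b).
Proof.
split.
  by move=> u v; rewrite /mulD_fun (teq_use (dD u v) (bal_ab a b)) big_cat.
move=> r v; rewrite /mulD_fun (teq_use (dL r v) (bal_ab a b)) big_map mulr_sumr.
by apply: eq_bigr => x _ /=; rewrite (Defs.lractA (blaws _)) ldev_lZ.
Qed.

Definition mulD p q (a : ldual (C p)) (b : ldual (C q)) : ldual (C (p + q)%N) :=
  exist _ _ (mulD_lin a b).

Lemma mulDE p q a b c : ldev (@mulD p q a b) c =
  \sum_(x <- @delC p q c) ldev a (bract x.1 (ldev b x.2)).
Proof. by []. Qed.

Lemma etaD_lin (r : R^c) : left_lin (fun c : C 0%N => epsC c * (r : R)).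
Proof.
case: epsm => e1 [e2 e3]; split=> *; first by rewrite e1 mulrDl.
by rewrite e2 mulrA.
Qed.
Definition etaD (r : R^c) : ldual (C 0%N) := exist _ _ (etaD_lin r).

Lemma hD_lin p q (a : ldual (A (p + q)%N)) (e : A q) :
  left_lin (fun a1 : A p => ldev a (@mulA p q a1 e)).
Proof. by split=> *; rewrite ?mDl ?mLl ?ldev_lD ?ldev_lZ. Qed.
Definition hD p q a e : ldual (A p) := exist _ _ (@hD_lin p q a e).

Definition delD p q (a : ldual (A (p + q)%N)) : seq (ldual (A p) * ldual (A q)) :=
  [seq (hD a e.1, e.2) | e <- bas q].

Lemma delD_eq p q a m n :
  \sum_(x <- @delD p q a) ldev x.1 (bract m (ldev x.2 n)) = ldev a (@mulA p q m n).
Proof.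
rewrite big_map [in RHS](Hbas n).
rewrite (addmap_bsum_map (f := fun v => ldev a (@mulA p q m v))); last first.
  by move=> u v; rewrite mDr ldev_lD.
by apply: eq_bigr => e _ /=; rewrite mB.
Qed.

Definition epsD (a : ldual (A 0%N)) : R^c := ldev a (etaA 1).

Lemma thetaD_lin (a : ldual (A 1%N)) : left_lin (fun c => ldev a (theta c)).
Proof. by case: Hth => t1 [t2 t3]; split=> *; rewrite ?t1 ?t2 ?ldev_lD ?ldev_lZ. Qed.
Definition thetaD a : ldual (C 1%N) := exist _ _ (thetaD_lin a).

Lemma mulcE (r s : R^c) : r * s = (s : R) * r :> R.
Proof. by []. Qed.

Lemma bal3 p q r (a : ldual (C p)) (b : ldual (C q)) (d : ldual (C r)) :
  balanced3 (G := R) (fun m n k => ldev a (bract m (ldev b (bract n (ldev d k))))).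
Proof.
split; first by move=> m m' n k; rewrite (Defs.ractDv (blaws _)) ldev_lD.
split.
  by move=> m n n' k; rewrite (Defs.ractDv (blaws _)) ldev_lD (Defs.ractDr (blaws _)) ldev_lD.
split.
  move=> m n k k'; rewrite ldev_lD (Defs.ractDr (blaws _)) ldev_lD.
  by rewrite (Defs.ractDr (blaws _)) ldev_lD.
split.
  by move=> m s n k; rewrite -(Defs.ractM (blaws _)) (Defs.lractA (blaws _)) ldev_lZ.
by move=> m n s k; rewrite -(Defs.ractM (blaws _)) ldev_lZ.
Qed.

Lemma Dm_Dl p q (a a' : ldual (C p)) (b : ldual (C q)) :
  mulD (badd a a') b = badd (mulD a b) (mulD a' b).
Proof. by apply: ldext => c; rewrite ldevD !mulDE -big_split; apply: eq_bigr. Qed.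

Lemma Dm_Dr p q (a : ldual (C p)) (b b' : ldual (C q)) :
  mulD a (badd b b') = badd (mulD a b) (mulD a b').
Proof.
apply: ldext => c; rewrite ldevD !mulDE -big_split; apply: eq_bigr => x _ /=.
by rewrite (Defs.ractDr (blaws _)) ldev_lD.
Qed.

Lemma Dm_B p q r (a : ldual (C p)) (b : ldual (C q)) :
  mulD (bract a r) b = mulD a (blact r b).
Proof.
apply: ldext => c; rewrite !mulDE; apply: eq_bigr => x _.
by rewrite ldevZr ldevZl (Defs.ractM (blaws _)).
Qed.

Lemma Dm_Ll p q r (a : ldual (C p)) (b : ldual (C q)) :
  mulD (blact r a) b = blact r (mulD a b).
Proof. by apply: ldext => c; rewrite ldevZl !mulDE mulr_suml; apply: eq_bigr. Qed.

Lemma Dm_Rr p q r (a : ldual (C p)) (b : ldual (C q)) :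
  mulD a (bract b r) = bract (mulD a b) r.
Proof.
apply: ldext => c; rewrite ldevZr !mulDE (teq_use (dR r c) (bal_ab a b)) big_map.
by apply: eq_bigr.
Qed.

Lemma Dm_As p q r (a : ldual (C p)) (b : ldual (C q)) (d : ldual (C r)) :
  mulD (mulD a b) d
  = gcast (fun k => ldual (C k) : Type) (addnA p q r) (mulD a (mulD b d)).
Proof.
apply: ldext => c; rewrite ldev_gcast !mulDE.
pose F3 (m : C p) (n : C q) (k : C r) := ldev a (bract m (ldev b (bract n (ldev d k)))).
transitivity (\sum_(y <- [seq ((u.1, u.2), x.2) | x <- @delC (p + q)%N r c,
                                               u <- @delC p q x.1]) F3 y.1.1 y.1.2 y.2).
  rewrite big_allpairs_dep /=; apply: eq_bigr => x _.
  by rewrite /mulD_fun (teq_use (dR _ x.1) (bal_ab a b)) big_map.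
rewrite (teq3_use (dAs c) (bal3 a b d)) big_allpairs_dep /=.
apply: eq_bigr => x _; rewrite /= ?mulDE /mulD_fun.
rewrite (sum_morph (g := fun s : R => ldev a (bract x.1 s))) //.
by move=> s s'; rewrite (Defs.ractDr (blaws _)) ldev_lD.
Qed.

Lemma Dm_eta : is_bimod_map (V := regular R^c) etaD.
Proof.
case: epsm => e1 [e2 e3].
split; first by move=> r s; apply: ldext => c; rewrite ldevD /= mulrDr.
split; first by move=> r s; apply: ldext => c; rewrite ldevZl /= mulcE mulrA.
by move=> r s; apply: ldext => c; rewrite ldevZr /= mulcE e3 /= mulrA.
Qed.

Lemma Dm_etab : bijective_map etaD.
Proof.
case: epsm => e1 [e2 e3]; case: epsb => epsi epss.
have [c1 Hc1] := epss 1.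
split.
  move=> r s E; have := f_equal (fun f => ldev f c1) E.
  by rewrite /= Hc1 !mul1r.
move=> f; exists (ldev f c1 : R^c); apply: ldext => c /=.
have Ec : c = blact (epsC c) c1 by apply: epsi; rewrite e2 /= Hc1 mulr1.
by rewrite {2}Ec ldev_lZ.
Qed.

Lemma Dm_eta1l q (b : ldual (C q)) : mulD (etaD 1) b = b.
Proof.
case: epsm => e1 [e2 e3].
apply: ldext => c; rewrite mulDE -[in RHS](eps1l c) ldev_vsum big_map.
by apply: eq_bigr => x _ /=; rewrite e3 /= mulr1 ldev_lZ.
Qed.

Lemma Dm_eta1r p (a : ldual (C p)) :
  mulD a (etaD 1) = gcast (fun k => ldual (C k) : Type) (esym (addn0 p)) a.
Proof.
apply: ldext => c; rewrite ldev_gcast mulDE.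
rewrite (gcast_irr (esym (esym _)) (addn0 p)) -eps1r ldev_vsum big_map.
by apply: eq_bigr => x _ /=; rewrite mulr1.
Qed.

Lemma D_ring : is_cgring (A := fun n => ldual (C n)) mulD etaD.
Proof.
split; first exact: Dm_Dl.
split; first exact: Dm_Dr.
split; first exact: Dm_B.
split; first exact: Dm_Ll.
split; first exact: Dm_Rr.
split; first exact: Dm_As.
split; first exact: Dm_eta.
split; first exact: Dm_etab.
split; first exact: Dm_eta1l.
exact: Dm_eta1r.
Qed.

Lemma Dc_D p q (a a' : ldual (A (p + q)%N)) :
  teq (@delD p q (badd a a')) (@delD p q a ++ @delD p q a').
Proof. by apply: (lteq_red (@Hbas q)) => m n; rewrite big_cat !delD_eq. Qed.

Lemma Dc_L p q r (a : ldual (A (p + q)%N)) :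
  teq (@delD p q (blact r a)) [seq (blact r x.1, x.2) | x <- @delD p q a].
Proof.
apply: (lteq_red (@Hbas q)) => m n; rewrite delD_eq [in RHS]big_map.
rewrite (eq_bigr (fun x => ldev x.1 (bract m (ldev x.2 n)) * r)); last by [].
by rewrite -mulr_suml delD_eq.
Qed.

Lemma Dc_R p q r (a : ldual (A (p + q)%N)) :
  teq (@delD p q (bract a r)) [seq (x.1, bract x.2 r) | x <- @delD p q a].
Proof.
apply: (lteq_red (@Hbas q)) => m n; rewrite delD_eq [in RHS]big_map.
rewrite (_ : \sum_(x <- @delD p q a) ldev x.1 (bract m (ldev (bract x.2 r) n))
           = ldev a (@mulA p q m (bract n r))); first by rewrite mRr.
exact: delD_eq.
Qed.

Lemma Dc_As p q r (a : ldual (A (p + q + r)%N)) :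
  teq3 [seq ((u.1, u.2), x.2) | x <- @delD (p + q)%N r a, u <- @delD p q x.1]
       [seq ((x.1, u.1), u.2) | x <- @delD p (q + r)%N
              (gcast (fun k => ldual (A k) : Type) (esym (addnA p q r)) a),
                                u <- @delD q r x.2].
Proof.
apply: (lteq3_red (@Hbas q) (@Hbas r)) => m n k.
rewrite !big_allpairs_dep /=.
transitivity (ldev a (mulA (mulA m n) k)).
  rewrite -delD_eq; apply: eq_bigr => x _; by rewrite delD_eq mRr.
symmetry.
transitivity (\sum_(x <- @delD p (q + r)%N
              (gcast (fun k => ldual (A k) : Type) (esym (addnA p q r)) a))
                ldev x.1 (bract m (ldev x.2 (mulA n k)))).
  apply: eq_bigr => x _; rewrite -delD_eq.
  rewrite (sum_morph (g := fun s : R => ldev x.1 (bract m s))) //.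
  by move=> s s'; rewrite (Defs.ractDr (blaws _)) ldev_lD.
rewrite delD_eq ldev_gcast (gcast_irr (esym (esym _)) (addnA p q r)).
by rewrite -mAs.
Qed.

Lemma eta_swap s : bract (etaA 1) s = blact s (etaA 1).
Proof. by case: etam => h1 [h2 h3]; rewrite -h3 -h2 /= mul1r mulr1. Qed.

Lemma Dc_eps : is_bimod_map (W := regular R^c) epsD.
Proof.
split; first by [].
split; first by [].
by move=> r f; rewrite /epsD ldevZr eta_swap ldev_lZ.
Qed.

Lemma Dc_epsb : bijective_map epsD.
Proof.
case: etam => h1 [h2 h3]; case: etab => ei es.
pose etainv v := epsilon (inhabits (0 : R)) (fun r => etaA r = v).
have spec v : etaA (etainv v) = v.
  by apply: (epsilon_spec (inhabits (0 : R)) (fun r => etaA r = v)); apply: es.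
have eta_bl r : etaA r = blact r (etaA 1) by rewrite -h2 /= mulr1.
split.
  move=> f g E; apply: ldext => v; rewrite -(spec v) eta_bl !ldev_lZ.
  by move: E; rewrite /epsD => ->.
move=> r.
have lin : left_lin (fun v : A 0%N => etainv v * (r : R)).
  split.
    by move=> u v; rewrite -mulrDl; congr (_ * _); apply: ei; rewrite h1 /= !spec.
  by move=> s v; rewrite mulrA; congr (_ * _); apply: ei; rewrite h2 /= !spec.
exists (exist _ _ lin); rewrite /epsD /=.
have -> : etainv (etaA 1) = 1 by apply: ei; rewrite spec.
by rewrite mul1r.
Qed.

Lemma Dc_eps1l q (a : ldual (A (0 + q)%N)) :
  bsum [seq blact (epsD x.1) x.2 | x <- @delD 0%N q a] = a.
Proof.
apply: ldext => v; rewrite ldev_bsum big_map -[in RHS](eta1l v) -(@delD_eq 0%N q a (etaA 1) v).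
by apply: eq_bigr => x _; rewrite ldevZl eta_swap ldev_lZ.
Qed.

Lemma Dc_eps1r p (a : ldual (A (p + 0)%N)) :
  bsum [seq bract x.1 (epsD x.2) | x <- @delD p 0%N a]
  = gcast (fun k => ldual (A k) : Type) (addn0 p) a.
Proof.
apply: ldext => v; rewrite ldev_bsum big_map ldev_gcast -eta1r -delD_eq.
by apply: eq_bigr.
Qed.

Lemma D_coring : is_cgcoring (C := fun n => ldual (A n)) delD epsD.
Proof.
split; first exact: Dc_D.
split; first exact: Dc_L.
split; first exact: Dc_R.
split; first exact: Dc_As.
split; first exact: Dc_eps.
split; first exact: Dc_epsb.
split; first exact: Dc_eps1l.
exact: Dc_eps1r.
Qed.

Lemma Dt_map : is_bimod_map thetaD.
Proof.
case: Hth => t1 [t2 t3].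
split; first by move=> a b; apply: ldext.
split; first by move=> r a; apply: ldext.
by move=> r a; apply: ldext => c /=; rewrite t3.
Qed.

Lemma Dt_bij : bijective_map thetaD.
Proof.
case: Hth => t1 [t2 t3]; case: Hthb => ti ts.
split.
  move=> a b E; apply: ldext => v; have [c <-] := ts v.
  by have := f_equal (fun f => ldev f c) E.
move=> g.
pose thinv v := epsilon (inhabits (bzero (C 1%N))) (fun c => theta c = v).
have spec v : theta (thinv v) = v.
  by apply: (epsilon_spec (inhabits (bzero (C 1%N))) (fun c => theta c = v)); apply: ts.
have lin : left_lin (fun v => ldev g (thinv v)).
  split.
    by move=> u v; rewrite -ldev_lD; congr ldev; apply: ti; rewrite t1 !spec.
  by move=> s v; rewrite -ldev_lZ; congr ldev; apply: ti; rewrite t2 !spec.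
exists (exist _ _ lin); apply: ldext => c /=.
by congr ldev; apply: ti; rewrite spec.
Qed.

Lemma Dt_koszul (a : ldual (A 2%N)) :
  bsum [seq @mulD 1%N 1%N (thetaD x.1) (thetaD x.2) | x <- @delD 1%N 1%N a]
  = bzero (ldual (C 2%N)).
Proof.
case: Hth => t1 [t2 t3].
apply: ldext => c; rewrite ldev_bsum big_map ldev0.
transitivity (\sum_(x <- @delD 1%N 1%N a) \sum_(y <- @delC 1%N 1%N c)
                ldev x.1 (bract (theta y.1) (ldev x.2 (theta y.2)))).
  by apply: eq_bigr => x _; rewrite mulDE; apply: eq_bigr => y _ /=; rewrite t3.
rewrite exchange_big.
rewrite (eq_bigr (fun y => ldev a (mulA (theta y.1) (theta y.2)))); last first.
  by move=> y _; rewrite delD_eq.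
transitivity (ldev a (bzero (A 2%N))); last exact: ldev_v0.
by rewrite -(Hk c) ldev_vsum big_map.
Qed.

Lemma left_exists :
   exists (mulD : forall p q, ldual (C p) -> ldual (C q) -> ldual (C (p + q)%N))
          (etaD : R^c -> ldual (C 0%N))
          (delD : forall p q, ldual (A (p + q)%N) -> seq (ldual (A p) * ldual (A q)))
          (thetaD : ldual (A 1%N) -> ldual (C 1%N)),
     (forall p q (a : ldual (C p)) (b : ldual (C q)) (c : C (p + q)%N),
        ldev (mulD p q a b) c
        = \sum_(x <- @delC p q c) ldev a (bract x.1 (ldev b x.2))) /\
     (forall (r : R^c) (c : C 0%N), ldev (etaD r) c = epsC c * (r : R)) /\
     (forall p q (a : ldual (A (p + q)%N)) (a1 : A p) (a2 : A q),
        ldev a (@mulA p q a1 a2)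
        = \sum_(x <- delD p q a) ldev x.1 (bract a1 (ldev x.2 a2))) /\
     (forall (a : ldual (A 1%N)) (c : C 1%N), ldev (thetaD a) c = ldev a (theta c)) /\
     almost_koszul mulD etaD delD (fun a : ldual (A 0%N) => ldev a (etaA 1) : R^c) thetaD.
Proof.
exists mulD, etaD, delD, thetaD.
split; first by [].
split; first by [].
split; first by move=> p q a a1 a2; rewrite delD_eq.
split; first by [].
split; first exact: D_ring.
split; first exact: D_coring.
split; first exact: Dt_map.
split; first exact: Dt_bij.
exact: Dt_koszul.
Qed.

End LeftPart.


Section RightPart.
Variables (R : pzRingType) (A : nat -> bimod R)
  (mulA : forall p q, A p -> A q -> A (p + q)%N) (etaA : R -> A 0%N)
  (C : nat -> bimod R) (delC : forall p q, C (p + q)%N -> seq (C p * C q))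
  (epsC : C 0%N -> R) (theta : C 1%N -> A 1%N).
Hypothesis HAC : almost_koszul mulA etaA delC epsC theta.
Variable bas : forall n, seq (A n * rdual (A n)).
Hypothesis Hbas : forall n v, v = bsum [seq bract x.1 (rdev x.2 v) | x <- bas n].

Let HA := proj1 HAC.
Let HC := proj1 (proj2 HAC).
Let Hth := proj1 (proj2 (proj2 HAC)).
Let Hthb := proj1 (proj2 (proj2 (proj2 HAC))).
Let Hk := proj2 (proj2 (proj2 (proj2 HAC))).
Let mDl := proj1 HA.
Let mDr := proj1 (proj2 HA).
Let mB := proj1 (proj2 (proj2 HA)).
Let mLl := proj1 (proj2 (proj2 (proj2 HA))).
Let mRr := proj1 (proj2 (proj2 (proj2 (proj2 HA)))).
Let mAs := proj1 (proj2 (proj2 (proj2 (proj2 (proj2 HA))))).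
Let etam := proj1 (proj2 (proj2 (proj2 (proj2 (proj2 (proj2 HA)))))).
Let etab := proj1 (proj2 (proj2 (proj2 (proj2 (proj2 (proj2 (proj2 HA))))))).
Let eta1l := proj1 (proj2 (proj2 (proj2 (proj2 (proj2 (proj2 (proj2 (proj2 HA)))))))).
Let eta1r := proj2 (proj2 (proj2 (proj2 (proj2 (proj2 (proj2 (proj2 (proj2 HA)))))))).
Let dD := proj1 HC.
Let dL := proj1 (proj2 HC).
Let dR := proj1 (proj2 (proj2 HC)).
Let dAs := proj1 (proj2 (proj2 (proj2 HC))).
Let epsm := proj1 (proj2 (proj2 (proj2 (proj2 HC)))).
Let epsb := proj1 (proj2 (proj2 (proj2 (proj2 (proj2 HC))))).
Let eps1l := proj1 (proj2 (proj2 (proj2 (proj2 (proj2 (proj2 HC)))))).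
Let eps1r := proj2 (proj2 (proj2 (proj2 (proj2 (proj2 (proj2 HC)))))).


Lemma rdevD (V : bimod R) (f g : rdual V) v : rdev (badd f g) v = rdev f v + rdev g v.
Proof. by []. Qed.
Lemma rdevZl (V : bimod R) (r : R^c) (f : rdual V) v :
  rdev (blact r f) v = rdev f (blact (r : R) v).
Proof. by []. Qed.
Lemma rdevZr (V : bimod R) (r : R^c) (f : rdual V) v : rdev (bract f r) v = (r : R) * rdev f v.
Proof. by []. Qed.
Lemma rdev0 (V : bimod R) v : rdev (bzero (rdual V)) v = 0.
Proof. by []. Qed.
Lemma rdev_v0 (V : bimod R) (f : rdual V) : rdev f (bzero V) = 0.
Proof. by apply: addmap0 => u v; apply: rdev_rD. Qed.

Lemma rbal_ab p q (a : rdual (C p)) (b : rdual (C q)) :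
  balanced2 (G := R) (fun u v => rdev b (blact (rdev a u) v)).
Proof.
split; first by move=> m m' n; rewrite rdev_rD (Defs.lactDr (blaws _)) rdev_rD.
split; first by move=> m n n'; rewrite (Defs.lactDv (blaws _)) rdev_rD.
by move=> m r n; rewrite rdev_rZ (Defs.lactM (blaws _)).
Qed.

Definition rmulD_fun p q (a : rdual (C p)) (b : rdual (C q)) (c : C (p + q)%N) : R :=
  \sum_(x <- @delC p q c) rdev b (blact (rdev a x.1) x.2).

Lemma rmulD_lin p q a b : right_lin (@rmulD_fun p q a b).
Proof.
split.
  by move=> u v; rewrite /rmulD_fun (teq_use (dD u v) (rbal_ab a b)) big_cat.
move=> r v; rewrite /rmulD_fun (teq_use (dR r v) (rbal_ab a b)) big_map mulr_suml.
by apply: eq_bigr => x _ /=; rewrite -(Defs.lractA (blaws _)) rdev_rZ.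
Qed.

Definition rmulD p q (a : rdual (C p)) (b : rdual (C q)) : rdual (C (p + q)%N) :=
  exist _ _ (rmulD_lin a b).

Lemma rmulDE p q a b c : rdev (@rmulD p q a b) c =
  \sum_(x <- @delC p q c) rdev b (blact (rdev a x.1) x.2).
Proof. by []. Qed.

Lemma retaD_lin (r : R^c) : right_lin (fun c : C 0%N => (r : R) * epsC c).
Proof.
case: epsm => e1 [e2 e3]; split=> *; first by rewrite e1 mulrDr.
by rewrite e3 mulrA.
Qed.
Definition retaD (r : R^c) : rdual (C 0%N) := exist _ _ (retaD_lin r).

Lemma rhD_lin p q (a : rdual (A (p + q)%N)) (e : A p) :
  right_lin (fun a2 : A q => rdev a (@mulA p q e a2)).
Proof. by split=> *; rewrite ?mDr ?mRr ?rdev_rD ?rdev_rZ. Qed.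
Definition rhD p q a e : rdual (A q) := exist _ _ (@rhD_lin p q a e).

Definition rdelD p q (a : rdual (A (p + q)%N)) : seq (rdual (A p) * rdual (A q)) :=
  [seq (e.2, rhD a e.1) | e <- bas p].

Lemma rdelD_eq p q a m n :
  \sum_(x <- @rdelD p q a) rdev x.2 (blact (rdev x.1 m) n) = rdev a (@mulA p q m n).
Proof.
rewrite big_map [in RHS](Hbas m).
rewrite (addmap_bsum_map (f := fun v => rdev a (@mulA p q v n))); last first.
  by move=> u v; rewrite mDl rdev_rD.
by apply: eq_bigr => e _ /=; rewrite mB.
Qed.

Definition repsD (a : rdual (A 0%N)) : R^c := rdev a (etaA 1).

Lemma rthetaD_lin (a : rdual (A 1%N)) : right_lin (fun c => rdev a (theta c)).
Proof. by case: Hth => t1 [t2 t3]; split=> *; rewrite ?t1 ?t3 ?rdev_rD ?rdev_rZ. Qed.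
Definition rthetaD a : rdual (C 1%N) := exist _ _ (rthetaD_lin a).

Lemma rbal3 p q r (a : rdual (C p)) (b : rdual (C q)) (d : rdual (C r)) :
  balanced3 (G := R) (fun m n k => rdev d (blact (rdev b (blact (rdev a m) n)) k)).
Proof.
split.
  move=> m m' n k; rewrite rdev_rD (Defs.lactDr (blaws _)) rdev_rD.
  by rewrite (Defs.lactDr (blaws _)) rdev_rD.
split.
  by move=> m n n' k; rewrite (Defs.lactDv (blaws _)) rdev_rD (Defs.lactDr (blaws _)) rdev_rD.
split; first by move=> m n k k'; rewrite (Defs.lactDv (blaws _)) rdev_rD.
split; first by move=> m s n k; rewrite rdev_rZ (Defs.lactM (blaws _)).
move=> m n s k; rewrite -(Defs.lractA (blaws _)) rdev_rZ.
by rewrite (Defs.lactM (blaws _)).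
Qed.

Lemma rDm_Dl p q (a a' : rdual (C p)) (b : rdual (C q)) :
  rmulD (badd a a') b = badd (rmulD a b) (rmulD a' b).
Proof.
apply: rdext => c; rewrite rdevD !rmulDE -big_split; apply: eq_bigr => x _ /=.
by rewrite (Defs.lactDr (blaws _)) rdev_rD.
Qed.

Lemma rDm_Dr p q (a : rdual (C p)) (b b' : rdual (C q)) :
  rmulD a (badd b b') = badd (rmulD a b) (rmulD a b').
Proof. by apply: rdext => c; rewrite rdevD !rmulDE -big_split; apply: eq_bigr. Qed.

Lemma rDm_B p q r (a : rdual (C p)) (b : rdual (C q)) :
  rmulD (bract a r) b = rmulD a (blact r b).
Proof.
apply: rdext => c; rewrite !rmulDE; apply: eq_bigr => x _.
by rewrite rdevZr rdevZl (Defs.lactM (blaws _)).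
Qed.

Lemma rDm_Ll p q r (a : rdual (C p)) (b : rdual (C q)) :
  rmulD (blact r a) b = blact r (rmulD a b).
Proof.
apply: rdext => c; rewrite rdevZl !rmulDE (teq_use (dL r c) (rbal_ab a b)) big_map.
by apply: eq_bigr.
Qed.

Lemma rDm_Rr p q r (a : rdual (C p)) (b : rdual (C q)) :
  rmulD a (bract b r) = bract (rmulD a b) r.
Proof. by apply: rdext => c; rewrite rdevZr !rmulDE mulr_sumr; apply: eq_bigr. Qed.

Lemma rDm_As p q r (a : rdual (C p)) (b : rdual (C q)) (d : rdual (C r)) :
  rmulD (rmulD a b) d
  = gcast (fun k => rdual (C k) : Type) (addnA p q r) (rmulD a (rmulD b d)).
Proof.
apply: rdext => c; rewrite rdev_gcast !rmulDE.
pose F3 (m : C p) (n : C q) (k : C r) := rdev d (blact (rdev b (blact (rdev a m) n)) k).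
transitivity (\sum_(y <- [seq ((u.1, u.2), x.2) | x <- @delC (p + q)%N r c,
                                               u <- @delC p q x.1]) F3 y.1.1 y.1.2 y.2).
  rewrite big_allpairs_dep /=; apply: eq_bigr => x _.
  rewrite /rmulD_fun (sum_morph (g := fun s : R => rdev d (blact s x.2))) //.
  by move=> s s'; rewrite (Defs.lactDr (blaws _)) rdev_rD.
rewrite (teq3_use (dAs c) (rbal3 a b d)) big_allpairs_dep /=.
apply: eq_bigr => x _; rewrite /= ?rmulDE /rmulD_fun.
by rewrite (teq_use (dL _ x.2) (rbal_ab b d)) big_map.
Qed.

Lemma rDm_eta : is_bimod_map (V := regular R^c) retaD.
Proof.
case: epsm => e1 [e2 e3].
split; first by move=> r s; apply: rdext => c; rewrite rdevD /= mulrDl.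
split; first by move=> r s; apply: rdext => c; rewrite rdevZl /= mulcE e2 /= mulrA.
by move=> r s; apply: rdext => c; rewrite rdevZr /= mulcE mulrA.
Qed.

Lemma rDm_etab : bijective_map retaD.
Proof.
case: epsm => e1 [e2 e3]; case: epsb => epsi epss.
have [c1 Hc1] := epss 1.
split.
  move=> r s E; have := f_equal (fun f => rdev f c1) E.
  by rewrite /= Hc1 !mulr1.
move=> f; exists (rdev f c1 : R^c); apply: rdext => c /=.
have Ec : c = bract c1 (epsC c) by apply: epsi; rewrite e3 /= Hc1 mul1r.
by rewrite {2}Ec rdev_rZ.
Qed.

Lemma rDm_eta1l q (b : rdual (C q)) : rmulD (retaD 1) b = b.
Proof.
case: epsm => e1 [e2 e3].
apply: rdext => c; rewrite rmulDE -[in RHS](eps1l c) rdev_vsum big_map.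
by apply: eq_bigr => x _ /=; rewrite mul1r.
Qed.

Lemma rDm_eta1r p (a : rdual (C p)) :
  rmulD a (retaD 1) = gcast (fun k => rdual (C k) : Type) (esym (addn0 p)) a.
Proof.
case: epsm => e1 [e2 e3].
apply: rdext => c; rewrite rdev_gcast rmulDE.
rewrite (gcast_irr (esym (esym _)) (addn0 p)) -eps1r rdev_vsum big_map.
by apply: eq_bigr => x _ /=; rewrite mul1r e2 rdev_rZ.
Qed.

Lemma rD_ring : is_cgring (A := fun n => rdual (C n)) rmulD retaD.
Proof.
split; first exact: rDm_Dl.
split; first exact: rDm_Dr.
split; first exact: rDm_B.
split; first exact: rDm_Ll.
split; first exact: rDm_Rr.
split; first exact: rDm_As.
split; first exact: rDm_eta.
split; first exact: rDm_etab.
split; first exact: rDm_eta1l.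
exact: rDm_eta1r.
Qed.

Lemma rDc_D p q (a a' : rdual (A (p + q)%N)) :
  teq (@rdelD p q (badd a a')) (@rdelD p q a ++ @rdelD p q a').
Proof. by apply: (rteq_red (@Hbas p)) => m n; rewrite big_cat !rdelD_eq. Qed.

Lemma rDc_L p q r (a : rdual (A (p + q)%N)) :
  teq (@rdelD p q (blact r a)) [seq (blact r x.1, x.2) | x <- @rdelD p q a].
Proof.
apply: (rteq_red (@Hbas p)) => m n; rewrite rdelD_eq [in RHS]big_map.
rewrite (_ : \sum_(x <- @rdelD p q a) rdev x.2 (blact (rdev (blact r x.1) m) n)
           = rdev a (@mulA p q (blact (r : R) m) n)); first by rewrite mLl.
exact: rdelD_eq.
Qed.

Lemma rDc_R p q r (a : rdual (A (p + q)%N)) :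
  teq (@rdelD p q (bract a r)) [seq (x.1, bract x.2 r) | x <- @rdelD p q a].
Proof.
apply: (rteq_red (@Hbas p)) => m n; rewrite rdelD_eq [in RHS]big_map.
rewrite (eq_bigr (fun x => (r : R) * rdev x.2 (blact (rdev x.1 m) n))); last by [].
by rewrite -mulr_sumr rdelD_eq.
Qed.

Lemma rDc_As p q r (a : rdual (A (p + q + r)%N)) :
  teq3 [seq ((u.1, u.2), x.2) | x <- @rdelD (p + q)%N r a, u <- @rdelD p q x.1]
       [seq ((x.1, u.1), u.2) | x <- @rdelD p (q + r)%N
              (gcast (fun k => rdual (A k) : Type) (esym (addnA p q r)) a),
                                u <- @rdelD q r x.2].
Proof.
apply: (rteq3_red (@Hbas p) (@Hbas q)) => m n k.
rewrite !big_allpairs_dep /=.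
transitivity (rdev a (mulA (mulA m n) k)).
  rewrite -rdelD_eq; apply: eq_bigr => x _.
  rewrite -(sum_morph (g := fun s : R => rdev x.2 (blact s k))); last first.
    by move=> s s'; rewrite (Defs.lactDr (blaws _)) rdev_rD.
  by rewrite rdelD_eq.
symmetry.
transitivity (\sum_(x <- @rdelD p (q + r)%N
              (gcast (fun k => rdual (A k) : Type) (esym (addnA p q r)) a))
                rdev x.2 (mulA (blact (rdev x.1 m) n) k)).
  by apply: eq_bigr => x _; rewrite -rdelD_eq.
rewrite (eq_bigr (fun x => rdev x.2 (blact (rdev x.1 m) (mulA n k)))); last first.
  by move=> x _; rewrite mLl.
rewrite rdelD_eq rdev_gcast (gcast_irr (esym (esym _)) (addnA p q r)).
by rewrite -mAs.
Qed.

Lemma reta_swap s : bract (etaA 1) s = blact s (etaA 1).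
Proof. by case: etam => h1 [h2 h3]; rewrite -h3 -h2 /= mul1r mulr1. Qed.

Lemma rDc_eps : is_bimod_map (W := regular R^c) repsD.
Proof.
split; first by [].
split; first by move=> r f; rewrite /repsD rdevZl -reta_swap rdev_rZ.
by [].
Qed.

Lemma rDc_epsb : bijective_map repsD.
Proof.
case: etam => h1 [h2 h3]; case: etab => ei es.
pose etainv v := epsilon (inhabits (0 : R)) (fun r => etaA r = v).
have spec v : etaA (etainv v) = v.
  by apply: (epsilon_spec (inhabits (0 : R)) (fun r => etaA r = v)); apply: es.
have eta_br r : etaA r = bract (etaA 1) r by rewrite -h3 /= mul1r.
split.
  move=> f g E; apply: rdext => v; rewrite -(spec v) eta_br !rdev_rZ.
  by move: E; rewrite /repsD => ->.
move=> r.
have lin : right_lin (fun v : A 0%N => (r : R) * etainv v).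
  split.
    by move=> u v; rewrite -mulrDr; congr (_ * _); apply: ei; rewrite h1 /= !spec.
  by move=> s v; rewrite -mulrA; congr (_ * _); apply: ei; rewrite h3 /= !spec.
exists (exist _ _ lin); rewrite /repsD /=.
have -> : etainv (etaA 1) = 1 by apply: ei; rewrite spec.
by rewrite mulr1.
Qed.

Lemma rDc_eps1l q (a : rdual (A (0 + q)%N)) :
  bsum [seq blact (repsD x.1) x.2 | x <- @rdelD 0%N q a] = a.
Proof.
apply: rdext => v; rewrite rdev_bsum big_map -[in RHS](eta1l v).
by rewrite -(@rdelD_eq 0%N q a (etaA 1) v).
Qed.

Lemma rDc_eps1r p (a : rdual (A (p + 0)%N)) :
  bsum [seq bract x.1 (repsD x.2) | x <- @rdelD p 0%N a]
  = gcast (fun k => rdual (A k) : Type) (addn0 p) a.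
Proof.
apply: rdext => v; rewrite rdev_bsum big_map rdev_gcast -eta1r -rdelD_eq.
by apply: eq_bigr => x _; rewrite rdevZr -reta_swap rdev_rZ.
Qed.

Lemma rD_coring : is_cgcoring (C := fun n => rdual (A n)) rdelD repsD.
Proof.
split; first exact: rDc_D.
split; first exact: rDc_L.
split; first exact: rDc_R.
split; first exact: rDc_As.
split; first exact: rDc_eps.
split; first exact: rDc_epsb.
split; first exact: rDc_eps1l.
exact: rDc_eps1r.
Qed.

Lemma rDt_map : is_bimod_map rthetaD.
Proof.
case: Hth => t1 [t2 t3].
split; first by move=> a b; apply: rdext.
split; first by move=> r a; apply: rdext => c /=; rewrite t2.
by move=> r a; apply: rdext.
Qed.

Lemma rDt_bij : bijective_map rthetaD.
Proof.
case: Hth => t1 [t2 t3]; case: Hthb => ti ts.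
split.
  move=> a b E; apply: rdext => v; have [c <-] := ts v.
  by have := f_equal (fun f => rdev f c) E.
move=> g.
pose thinv v := epsilon (inhabits (bzero (C 1%N))) (fun c => theta c = v).
have spec v : theta (thinv v) = v.
  by apply: (epsilon_spec (inhabits (bzero (C 1%N))) (fun c => theta c = v)); apply: ts.
have lin : right_lin (fun v => rdev g (thinv v)).
  split.
    by move=> u v; rewrite -rdev_rD; congr rdev; apply: ti; rewrite t1 !spec.
  by move=> s v; rewrite -rdev_rZ; congr rdev; apply: ti; rewrite t3 !spec.
exists (exist _ _ lin); apply: rdext => c /=.
by congr rdev; apply: ti; rewrite spec.
Qed.

Lemma rDt_koszul (a : rdual (A 2%N)) :
  bsum [seq @rmulD 1%N 1%N (rthetaD x.1) (rthetaD x.2) | x <- @rdelD 1%N 1%N a]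
  = bzero (rdual (C 2%N)).
Proof.
case: Hth => t1 [t2 t3].
apply: rdext => c; rewrite rdev_bsum big_map rdev0.
transitivity (\sum_(x <- @rdelD 1%N 1%N a) \sum_(y <- @delC 1%N 1%N c)
                rdev x.2 (blact (rdev x.1 (theta y.1)) (theta y.2))).
  by apply: eq_bigr => x _; rewrite rmulDE; apply: eq_bigr => y _ /=; rewrite t2.
rewrite exchange_big.
rewrite (eq_bigr (fun y => rdev a (mulA (theta y.1) (theta y.2)))); last first.
  by move=> y _; rewrite rdelD_eq.
transitivity (rdev a (bzero (A 2%N))); last exact: rdev_v0.
by rewrite -(Hk c) rdev_vsum big_map.
Qed.

Lemma right_exists :
   exists (mulD : forall p q, rdual (C p) -> rdual (C q) -> rdual (C (p + q)%N))
          (etaD : R^c -> rdual (C 0%N))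
          (delD : forall p q, rdual (A (p + q)%N) -> seq (rdual (A p) * rdual (A q)))
          (thetaD : rdual (A 1%N) -> rdual (C 1%N)),
     (forall p q (a : rdual (C p)) (b : rdual (C q)) (c : C (p + q)%N),
        rdev (mulD p q a b) c
        = \sum_(x <- @delC p q c) rdev b (blact (rdev a x.1) x.2)) /\
     (forall (r : R^c) (c : C 0%N), rdev (etaD r) c = (r : R) * epsC c) /\
     (forall p q (a : rdual (A (p + q)%N)) (a1 : A p) (a2 : A q),
        rdev a (@mulA p q a1 a2)
        = \sum_(x <- delD p q a) rdev x.2 (blact (rdev x.1 a1) a2)) /\
     (forall (a : rdual (A 1%N)) (c : C 1%N), rdev (thetaD a) c = rdev a (theta c)) /\
     almost_koszul mulD etaD delD (fun a : rdual (A 0%N) => rdev a (etaA 1) : R^c) thetaD.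
Proof.
exists rmulD, retaD, rdelD, rthetaD.
split; first by [].
split; first by [].
split; first by move=> p q a a1 a2; rewrite rdelD_eq.
split; first by [].
split; first exact: rD_ring.
split; first exact: rD_coring.
split; first exact: rDt_map.
split; first exact: rDt_bij.
exact: rDt_koszul.
Qed.

End RightPart.

Theorem proposition5p1 (R : pzRingType) (HR : semisimple_ring R)
  (A : nat -> bimod R) (mulA : forall p q, A p -> A q -> A (p + q)%N)
  (etaA : R -> A 0%N)
  (C : nat -> bimod R) (delC : forall p q, C (p + q)%N -> seq (C p * C q))
  (epsC : C 0%N -> R) (theta : C 1%N -> A 1%N)
  (HAC : almost_koszul mulA etaA delC epsC theta) :
  (* left graded duals: ( *-gr C, *-gr A ) is almost-Koszul over R^op *)
  (left_locally_finite A -> left_locally_finite C ->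
   exists (mulD : forall p q, ldual (C p) -> ldual (C q) -> ldual (C (p + q)%N))
          (etaD : R^c -> ldual (C 0%N))
          (delD : forall p q, ldual (A (p + q)%N) -> seq (ldual (A p) * ldual (A q)))
          (thetaD : ldual (A 1%N) -> ldual (C 1%N)),
     (forall p q (a : ldual (C p)) (b : ldual (C q)) (c : C (p + q)%N),
        ldev (mulD p q a b) c
        = \sum_(x <- delC p q c) ldev a (bract x.1 (ldev b x.2))) /\
     (forall (r : R^c) (c : C 0%N), ldev (etaD r) c = epsC c * (r : R)) /\
     (forall p q (a : ldual (A (p + q)%N)) (a1 : A p) (a2 : A q),
        ldev a (mulA p q a1 a2)
        = \sum_(x <- delD p q a) ldev x.1 (bract a1 (ldev x.2 a2))) /\
     (forall (a : ldual (A 1%N)) (c : C 1%N), ldev (thetaD a) c = ldev a (theta c)) /\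
     almost_koszul mulD etaD delD (fun a : ldual (A 0%N) => ldev a (etaA 1) : R^c) thetaD)
  /\
  (* right graded duals: ( C *-gr, A *-gr ) is almost-Koszul over R^op *)
  (right_locally_finite A -> right_locally_finite C ->
   exists (mulD : forall p q, rdual (C p) -> rdual (C q) -> rdual (C (p + q)%N))
          (etaD : R^c -> rdual (C 0%N))
          (delD : forall p q, rdual (A (p + q)%N) -> seq (rdual (A p) * rdual (A q)))
          (thetaD : rdual (A 1%N) -> rdual (C 1%N)),
     (forall p q (a : rdual (C p)) (b : rdual (C q)) (c : C (p + q)%N),
        rdev (mulD p q a b) c
        = \sum_(x <- delC p q c) rdev b (blact (rdev a x.1) x.2)) /\
     (forall (r : R^c) (c : C 0%N), rdev (etaD r) c = (r : R) * epsC c) /\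
     (forall p q (a : rdual (A (p + q)%N)) (a1 : A p) (a2 : A q),
        rdev a (mulA p q a1 a2)
        = \sum_(x <- delD p q a) rdev x.2 (blact (rdev x.1 a1) a2)) /\
     (forall (a : rdual (A 1%N)) (c : C 1%N), rdev (thetaD a) c = rdev a (theta c)) /\
     almost_koszul mulD etaD delD (fun a : rdual (A 0%N) => rdev a (etaA 1) : R^c) thetaD).

Proof.
split.
- move=> HlA _.
  have Hb n : exists bs : seq (A n * ldual (A n)),
      forall v, v = bsum [seq blact (ldev x.2 v) x.1 | x <- bs].
    exact: (ldual_basis HR (HlA n)).
  pose bas n := proj1_sig (constructive_indefinite_description _ (Hb n)).
  have Hbas n v : v = bsum [seq blact (ldev x.2 v) x.1 | x <- bas n].
    exact: (proj2_sig (constructive_indefinite_description _ (Hb n)) v).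
  exact: (left_exists HAC Hbas).
- move=> HrA _.
  have Hb n : exists bs : seq (A n * rdual (A n)),
      forall v, v = bsum [seq bract x.1 (rdev x.2 v) | x <- bs].
    exact: (rdual_basis HR (HrA n)).
  pose bas n := proj1_sig (constructive_indefinite_description _ (Hb n)).
  have Hbas n v : v = bsum [seq bract x.1 (rdev x.2 v) | x <- bas n].
    exact: (proj2_sig (constructive_indefinite_description _ (Hb n)) v).
  exact: (right_exists HAC Hbas).
Qed.
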